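(* Let $H\in C^2(\mathbb{R}^2)$ satisfy (H1) and (H2). Then: (i) $\tilde\tau_H\in C^0(\mathbb{R}^2)$, $\tilde\tau_H(0)=\frac12$, and $\tilde\tau_H(p)\ge\frac12\Big[\frac{\lambda_H(H(p))}{\Lambda_H(H(p))}\Big]^2$ for all $p\ne0$; (ii) if $H^\gamma$ is convex on $H^{-1}([0,R])$ for some $\gamma\in[\frac12,1)$ and $R>0$, then $\tilde\tau_H\ge1-\gamma$ on $H^{-1}([0,R])$.
   Context: Local strong convexity/concavity: for every bounded convex $U\subset\mathbb{R}^2$ there is $\lambda>0$ (resp. $\Lambda>0$) with $H(p)-\frac\lambda2|p|^2$ (resp. $\frac\Lambda2|p|^2-H(p)$) convex on $U$. (H1): $H$ locally strongly convex and locally strongly concave. (H2): $H(0)=\min H=0$. $\lambda_H(R):=\sup_{\epsilon>0}\sup\{\lambda>0: H-\frac\lambda2|p|^2\text{ convex on }H^{-1}([0,R+\epsilon))\}$, $\Lambda_H(R):=\inf_{\epsilon>0}\inf\{\Lambda>0:\frac\Lambda2|p|^2-H\text{ convex on }H^{-1}([0,R+\epsilon))\}$. $\tilde\tau_H(0)=\frac12$ and $\tilde\tau_H(p)=H(p)/\langle[D^2_{pp}H(p)]^{-1}D_pH(p),D_pH(p)\rangle$ for $p\ne0$. *)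

(* Defs.v *)
From Stdlib Require Import Reals.
From Coquelicot Require Import Coquelicot.
Open Scope R_scope.

Definition sqn (p : R * R) : R := fst p ^ 2 + snd p ^ 2.

Definition comb (t : R) (p q : R * R) : R * R :=
  (t * fst p + (1 - t) * fst q, t * snd p + (1 - t) * snd q).

Definition pd1 (f : R * R -> R) (p : R * R) : R :=
  Derive (fun t => f (t, snd p)) (fst p).
Definition pd2 (f : R * R -> R) (p : R * R) : R :=
  Derive (fun t => f (fst p, t)) (snd p).

Definition has_partials (f : R * R -> R) : Prop :=
  forall p, ex_derive (fun t => f (t, snd p)) (fst p) /\
            ex_derive (fun t => f (fst p, t)) (snd p).

Definition C2 (f : R * R -> R) : Prop :=
  has_partials f /\ has_partials (pd1 f) /\ has_partials (pd2 f) /\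
  forall p, continuous (pd1 (pd1 f)) p /\ continuous (pd2 (pd1 f)) p /\
            continuous (pd1 (pd2 f)) p /\ continuous (pd2 (pd2 f)) p.

Definition convex_set (U : R * R -> Prop) : Prop :=
  forall p q t, U p -> U q -> 0 <= t <= 1 -> U (comb t p q).

Definition bounded_set (U : R * R -> Prop) : Prop :=
  exists M, forall p, U p -> sqn p <= M.

Definition convex_on (U : R * R -> Prop) (f : R * R -> R) : Prop :=
  forall p q t, U p -> U q -> 0 <= t <= 1 ->
    f (comb t p q) <= t * f p + (1 - t) * f q.

Definition loc_strongly_convex (H : R * R -> R) : Prop :=
  forall U, bounded_set U -> convex_set U ->
    exists lam, 0 < lam /\ convex_on U (fun p => H p - lam / 2 * sqn p).

Definition loc_strongly_concave (H : R * R -> R) : Prop :=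
  forall U, bounded_set U -> convex_set U ->
    exists Lam, 0 < Lam /\ convex_on U (fun p => Lam / 2 * sqn p - H p).

Definition H1 (H : R * R -> R) : Prop :=
  loc_strongly_convex H /\ loc_strongly_concave H.

Definition H2 (H : R * R -> R) : Prop :=
  H (0, 0) = 0 /\ forall p, 0 <= H p.

Definition sublev_lt (H : R * R -> R) (a : R) : R * R -> Prop :=
  fun p => 0 <= H p /\ H p < a.
Definition sublev_le (H : R * R -> R) (a : R) : R * R -> Prop :=
  fun p => 0 <= H p /\ H p <= a.

Definition lambda_H (H : R * R -> R) (r : R) : Rbar :=
  Rbar_lub (fun l => exists eps, 0 < eps /\
    l = Lub_Rbar (fun lam => 0 < lam /\
          convex_on (sublev_lt H (r + eps)) (fun p => H p - lam / 2 * sqn p))).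

Definition Lambda_H (H : R * R -> R) (r : R) : Rbar :=
  Rbar_glb (fun l => exists eps, 0 < eps /\
    l = Glb_Rbar (fun Lam => 0 < Lam /\
          convex_on (sublev_lt H (r + eps)) (fun p => Lam / 2 * sqn p - H p))).

(* <[D^2H(p)]^{-1} DH(p), DH(p)>, with the 2x2 inverse written out
   (Hessian [[a,b],[c,d]], gradient (g1,g2)). *)
Definition inv_hess_quad (H : R * R -> R) (p : R * R) : R :=
  let a := pd1 (pd1 H) p in let b := pd2 (pd1 H) p in
  let c := pd1 (pd2 H) p in let d := pd2 (pd2 H) p in
  let g1 := pd1 H p in let g2 := pd2 H p in
  (d * g1 ^ 2 - (b + c) * g1 * g2 + a * g2 ^ 2) / (a * d - b * c).

Definition tau_tilde (H : R * R -> R) (p : R * R) : R :=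
  if Req_EM_T (fst p) 0 then
    (if Req_EM_T (snd p) 0 then 1 / 2 else H p / inv_hess_quad H p)
  else H p / inv_hess_quad H p.

(* x^g for x >= 0 (with 0^g = 0 for g > 0) *)
Definition powr (x g : R) : R := if Rlt_dec 0 x then Rpower x g else 0.

(* Main.v *)
Require Import Defs.
From Stdlib Require Import Reals Lra Psatz Classical.
From Coquelicot Require Import Coquelicot.
Open Scope R_scope.

Lemma RLIM (g : R -> R) (L C d : R) :
  is_derive g 0 L -> 0 < d ->
  (forall th, 0 < th < d -> g th - g 0 <= th * C) -> L <= C.
Proof.
  intros HD Hd Hb.
  apply is_derive_Reals in HD.
  destruct (Rle_or_lt L C) as [?|HLC]; [assumption|exfalso].
  assert (He : 0 < L - C) by lra.
  destruct (HD (L - C) He) as [del Hdel].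
  set (h := Rmin (d/2) (del/2)).
  assert (Hh0 : 0 < h) by (unfold h; apply Rmin_pos; destruct del; simpl; lra).
  assert (Hh1 : h < d) by (unfold h; pose proof (Rmin_l (d/2) (del/2)); lra).
  assert (Hh2 : h < del) by (unfold h; pose proof (Rmin_r (d/2) (del/2)); destruct del; simpl in *; lra).
  assert (Hn : h <> 0) by lra.
  assert (Ha : Rabs h < del) by (rewrite Rabs_pos_eq; lra).
  specialize (Hdel h Hn Ha).
  specialize (Hb h (conj Hh0 Hh1)).
  rewrite Rplus_0_l in Hdel.
  assert (Hq : (g h - g 0) / h <= C).
  { apply (Rmult_le_reg_r h); [lra|]. unfold Rdiv. rewrite Rmult_assoc, Rinv_l by lra. lra. }
  apply Rabs_def2 in Hdel. lra.
Qed.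

Definition cvx1 (k : R -> R) (I : R -> Prop) : Prop :=
  forall x y th, I x -> I y -> 0 <= th <= 1 ->
    k (th * x + (1 - th) * y) <= th * k x + (1 - th) * k y.

Lemma is_derive_aff (s w x : R) : is_derive (fun th => s + th * w) x w.
Proof. auto_derive; [exact I| ring]. Qed.

Lemma CVX_SLOPE (k : R -> R) (I : R -> Prop) s t l :
  cvx1 k I -> I s -> I t -> is_derive k s l -> l * (t - s) <= k t - k s.
Proof.
  intros Hc Hs Ht Hd.
  set (g := fun th => k (s + th * (t - s))).
  assert (Hg : is_derive g 0 (l * (t - s))).
  { unfold g.
    assert (E : l * (t - s) = (t - s) * l) by ring. rewrite E.
    apply (is_derive_comp k (fun th => s + th * (t - s))).
    - replace (s + 0 * (t - s)) with s by ring. exact Hd.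
    - apply is_derive_aff. }
  apply (RLIM g _ _ 1 Hg); [lra|].
  intros th Hth. unfold g.
  replace (s + th * (t - s)) with (th * t + (1 - th) * s) by ring.
  replace (s + 0 * (t - s)) with s by ring.
  specialize (Hc t s th Ht Hs ltac:(lra)). lra.
Qed.

Lemma HESS_1D (k k' : R -> R) (I : R -> Prop) d l :
  cvx1 k I -> I 0 -> 0 < d -> (forall t, 0 < t < d -> I t) ->
  (forall t, 0 <= t < d -> is_derive k t (k' t)) ->
  is_derive k' 0 l -> 0 <= l.
Proof.
  intros Hc I0 Hd It Hk Hk'.
  assert (Hmono : forall t, 0 < t < d -> k' 0 <= k' t).
  { intros t Ht.
    pose proof (CVX_SLOPE k I 0 t (k' 0) Hc I0 (It t Ht) (Hk 0 ltac:(lra))).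
    pose proof (CVX_SLOPE k I t 0 (k' t) Hc (It t Ht) I0 (Hk t ltac:(lra))).
    assert ((k' t - k' 0) * t >= 0) by nra. nra. }
  assert (Ho : is_derive (fun x => - k' x) 0 (- l)) by exact (is_derive_opp _ _ _ Hk').
  pose proof (RLIM (fun x => - k' x) (- l) 0 d Ho Hd).
  assert (- l <= 0); [|lra].
  apply H. intros th Hth. specialize (Hmono th Hth). lra.
Qed.

Lemma dplus (f g : R -> R) x df dg : is_derive f x df -> is_derive g x dg ->
  is_derive (fun s => f s + g s) x (df + dg).
Proof. intros A B. exact (is_derive_plus f g x df dg A B). Qed.
Lemma dminus (f g : R -> R) x df dg : is_derive f x df -> is_derive g x dg ->
  is_derive (fun s => f s - g s) x (df - dg).
Proof. intros A B. exact (is_derive_minus f g x df dg A B). Qed.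
Lemma dmult (f g : R -> R) x df dg : is_derive f x df -> is_derive g x dg ->
  is_derive (fun s => f s * g s) x (df * g x + f x * dg).
Proof. intros A B. exact (is_derive_mult f g x df dg A B Rmult_comm). Qed.
Lemma dconst (c x : R) : is_derive (fun _ => c) x 0.
Proof. exact (is_derive_const c x). Qed.
Lemma dmulc (f : R -> R) x df c : is_derive f x df ->
  is_derive (fun s => f s * c) x (df * c).
Proof. intros A. pose proof (dmult f (fun _ => c) x df 0 A (dconst c x)).
  replace (df * c) with (df * c + f x * 0) by ring. exact H. Qed.
Lemma dcmul (f : R -> R) x df c : is_derive f x df ->
  is_derive (fun s => c * f s) x (c * df).
Proof. intros A. exact (is_derive_scal f x c df A). Qed.
Lemma deq (f : R -> R) x l l' : is_derive f x l -> l = l' -> is_derive f x l'.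
Proof. intros A e. subst. exact A. Qed.

Lemma ballR (x e y : R) : ball x e y <-> Rabs (y - x) < e.
Proof. split; intro h; exact h. Qed.

Lemma CONT_LT (k : R -> R) x c : continuous k x -> k x < c ->
  exists d, 0 < d /\ forall t, Rabs (t - x) < d -> k t < c.
Proof.
  intros Hc Hlt.
  assert (He : 0 < c - k x) by lra.
  destruct (proj1 (filterlim_locally k (k x)) Hc (mkposreal _ He)) as [d Hd].
  exists d. split; [apply cond_pos|].
  intros t Ht. specialize (Hd t Ht).
  assert (Hd' : Rabs (k t - k x) < c - k x) by exact Hd.
  apply Rabs_def2 in Hd'. lra.
Qed.

Lemma CONT_GT (k : R -> R) x c : continuous k x -> c < k x ->
  exists d, 0 < d /\ forall t, Rabs (t - x) < d -> c < k t.
Proof.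
  intros Hc Hlt.
  assert (He : 0 < k x - c) by lra.
  destruct (proj1 (filterlim_locally k (k x)) Hc (mkposreal _ He)) as [d Hd].
  exists d. split; [apply cond_pos|].
  intros t Ht. specialize (Hd t Ht).
  assert (Hd' : Rabs (k t - k x) < k x - c) by exact Hd.
  apply Rabs_def2 in Hd'. lra.
Qed.

Lemma dcont (f : R -> R) x l : is_derive f x l -> continuous f x.
Proof. intros D. apply (ex_derive_continuous (K:=R_AbsRing) (V:=R_NormedModule)). exists l. exact D. Qed.

Lemma MVT_bound (f f' : R -> R) T K :
  0 <= T -> (forall t, 0 <= t <= T -> is_derive f t (f' t)) ->
  (forall t, 0 <= t <= T -> Rabs (f' t) <= K) -> Rabs (f T - f 0) <= K * T.
Proof.
  intros HT Hd HK.
  destruct (MVT_gen f 0 T f') as [c [Hc E]].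
  - intros x Hx. rewrite Rmin_left in Hx by lra. rewrite Rmax_right in Hx by lra.
    apply Hd. lra.
  - intros x Hx. rewrite Rmin_left in Hx by lra. rewrite Rmax_right in Hx by lra.
    apply continuity_pt_filterlim. eapply dcont. apply Hd. lra.
  - rewrite Rmin_left in Hc by lra. rewrite Rmax_right in Hc by lra.
    rewrite E, Rminus_0_r, Rabs_mult, (Rabs_pos_eq T) by lra.
    apply Rmult_le_compat_r; [lra|]. apply HK. lra.
Qed.

Lemma TAYLOR2 (f f' f'' : R -> R) K :
  (forall t, 0 <= t <= 1 -> is_derive f t (f' t)) ->
  (forall t, 0 <= t <= 1 -> is_derive f' t (f'' t)) ->
  f' 0 = 0 ->
  (forall t, 0 <= t <= 1 -> Rabs (f'' t) <= K) -> Rabs (f 1 - f 0) <= K.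
Proof.
  intros D1 D2 H0 HK.
  assert (HK0 : 0 <= K) by (specialize (HK 0 ltac:(lra)); pose proof (Rabs_pos (f'' 0)); lra).
  assert (B : forall t, 0 <= t <= 1 -> Rabs (f' t) <= K).
  { intros t Ht. pose proof (MVT_bound f' f'' t K (proj1 Ht)) as M.
    rewrite H0, Rminus_0_r in M.
    assert (Rabs (f' t) <= K * t).
    { apply M. intros; apply D2; lra. intros; apply HK; lra. }
    nra. }
  pose proof (MVT_bound f f' 1 K ltac:(lra) D1 B). lra.
Qed.

Lemma derive_loc (f g : R -> R) t l d :
  (forall u, Rabs u < d -> f u = g u) -> Rabs t < d -> is_derive g t l -> is_derive f t l.
Proof.
  intros E Ht D.
  apply (is_derive_ext_loc g f t l); [|exact D].
  assert (Hp : 0 < d - Rabs t) by lra.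
  exists (mkposreal _ Hp). intros y Hy. change R in y.
  assert (Hy' : Rabs (y - t) < d - Rabs t) by exact Hy.
  symmetry. apply E.
  pose proof (Rabs_triang_inv y t). pose proof (Rabs_triang (y - t) t).
  replace (y - t + t) with y in H0 by (simpl; ring). lra.
Qed.

Lemma dexpln (h : R -> R) t h' gam : 0 < h t -> is_derive h t h' ->
  is_derive (fun s => exp (gam * ln (h s))) t (exp (gam * ln (h t)) * (gam * (h' * / h t))).
Proof.
  intros Hp D.
  eapply deq.
  - apply (is_derive_comp exp (fun s => gam * ln (h s))).
    + apply is_derive_exp.
    + apply dcmul. apply (is_derive_comp ln h). apply is_derive_ln; exact Hp. exact D.
  - simpl. unfold scal; simpl. unfold mult; simpl. ring.
Qed.

Lemma dsq2 (c x : R) : is_derive (fun t => t ^ 2 / 2 * c) x (x * c).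
Proof. auto_derive; [exact I|]. field. Qed.
Lemma dlinc (c x : R) : is_derive (fun t => t * c) x c.
Proof. auto_derive; [exact I|]. ring. Qed.

Definition diffble (f : R * R -> R) (p : R * R) : Prop :=
  differentiable_pt_lim (fun x y => f (x, y)) (fst p) (snd p) (pd1 f p) (pd2 f p).

Lemma DIFF (f : R * R -> R) :
  has_partials f -> (forall p, continuous (pd1 f) p) -> forall p, diffble f p.
Proof.
  intros Hp Hc [x y]. unfold diffble. simpl.
  apply filterdiff_differentiable_pt_lim.
  eapply filterdiff_ext_lin.
  - apply (is_derive_filterdiff (fun x y => f (x, y)) x y (fun u v => pd1 f (u, v)) (pd2 f (x, y))).
    + apply filter_forall. intros [u v]. simpl.
      destruct (Hp (u, v)) as [H1 _]. simpl in H1.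
      unfold pd1. simpl. apply Derive_correct. exact H1.
    + destruct (Hp (x, y)) as [_ H2]. simpl in H2.
      unfold pd2. simpl. apply Derive_correct. exact H2.
    + eapply continuous_ext; [|apply (Hc (x, y))].
      intros [u v]. reflexivity.
  - intros [u v]. simpl. reflexivity.
Qed.

Lemma DIFF_cont (f : R * R -> R) p : diffble f p -> continuous f p.
Proof.
  intros Hd. destruct p as [x y].
  assert (Hc : continuity_2d_pt (fun x y => f (x, y)) x y).
  { apply differentiable_continuity_pt. exists (pd1 f (x,y)), (pd2 f (x,y)). exact Hd. }
  apply continuity_2d_pt_filterlim in Hc.
  eapply filterlim_ext; [|exact Hc]. intros [u v]. reflexivity.
Qed.

Definition lin (p v : R * R) (t : R) : R * R := (fst p + t * fst v, snd p + t * snd v).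

Lemma LINE (f : R * R -> R) p v t :
  diffble f (lin p v t) ->
  is_derive (fun s => f (lin p v s)) t (pd1 f (lin p v t) * fst v + pd2 f (lin p v t) * snd v).
Proof.
  intros Hd. apply is_derive_Reals.
  apply (derivable_pt_lim_comp_2d (fun x y => f (x, y)) (fun s => fst p + s * fst v) (fun s => snd p + s * snd v)).
  - exact Hd.
  - apply is_derive_Reals. apply is_derive_aff.
  - apply is_derive_Reals. apply is_derive_aff.
Qed.

Lemma cont2d (f : R * R -> R) x y : continuous f (x, y) -> continuity_2d_pt (fun u v => f (u, v)) x y.
Proof.
  intros Hc. apply continuity_2d_pt_filterlim.
  eapply filterlim_ext; [|exact Hc]. intros [u v]. reflexivity.
Qed.

Section Reg.
Variable H : R * R -> R.
Hypothesis HC2 : C2 H.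

Lemma reg_cont_pd11 p : continuous (pd1 (pd1 H)) p.
Proof. destruct HC2 as (_&_&_&Hc). exact (proj1 (Hc p)). Qed.
Lemma reg_cont_pd21 p : continuous (pd2 (pd1 H)) p.
Proof. destruct HC2 as (_&_&_&Hc). exact (proj1 (proj2 (Hc p))). Qed.
Lemma reg_cont_pd12 p : continuous (pd1 (pd2 H)) p.
Proof. destruct HC2 as (_&_&_&Hc). exact (proj1 (proj2 (proj2 (Hc p)))). Qed.
Lemma reg_cont_pd22 p : continuous (pd2 (pd2 H)) p.
Proof. destruct HC2 as (_&_&_&Hc). exact (proj2 (proj2 (proj2 (Hc p)))). Qed.

Lemma reg_diff1 p : diffble (pd1 H) p.
Proof. destruct HC2 as (_&H1&_&_). apply DIFF; [exact H1|]. intros; apply reg_cont_pd11. Qed.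
Lemma reg_diff2 p : diffble (pd2 H) p.
Proof. destruct HC2 as (_&_&H2&_). apply DIFF; [exact H2|]. intros; apply reg_cont_pd12. Qed.
Lemma reg_diff0 p : diffble H p.
Proof. destruct HC2 as (H0&_&_&_). apply DIFF; [exact H0|]. intros; apply DIFF_cont, reg_diff1. Qed.
Lemma reg_cont0 p : continuous H p.
Proof. apply DIFF_cont, reg_diff0. Qed.
Lemma reg_cont1 p : continuous (pd1 H) p.
Proof. apply DIFF_cont, reg_diff1. Qed.
Lemma reg_cont2 p : continuous (pd2 H) p.
Proof. apply DIFF_cont, reg_diff2. Qed.

Lemma reg_schwarz p : pd1 (pd2 H) p = pd2 (pd1 H) p.
Proof.
  destruct HC2 as (H0&H1&H2&Hc). destruct p as [x y].
  pose proof (Schwarz (fun u v => H (u, v)) x y) as S.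
  change (Derive (fun z => Derive (fun t => H (z, t)) y) x =
          Derive (fun z => Derive (fun t => H (t, z)) x) y).
  apply S; clear S.
  - exists (mkposreal 1 Rlt_0_1). intros u v _ _.
    destruct (H0 (u, v)) as [A B]. destruct (H1 (u, v)) as [C D]. destruct (H2 (u, v)) as [E F].
    split; [exact A|]. split; [exact B|]. split; [exact E|]. exact D.
  - exact (cont2d _ x y (reg_cont_pd12 (x, y))).
  - exact (cont2d _ x y (reg_cont_pd21 (x, y))).
Qed.
End Reg.

Definition ha (H : R * R -> R) p := pd1 (pd1 H) p.
Definition hb (H : R * R -> R) p := pd2 (pd1 H) p.
Definition hd (H : R * R -> R) p := pd2 (pd2 H) p.
Definition Qf (H : R * R -> R) x (v : R * R) :=
  ha H x * fst v ^ 2 + 2 * hb H x * fst v * snd v + hd H x * snd v ^ 2.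
Definition Gf (H : R * R -> R) x (v : R * R) := pd1 H x * fst v + pd2 H x * snd v.

Lemma lin0 x v : lin x v 0 = x.
Proof. destruct x; unfold lin; simpl; f_equal; ring. Qed.

Lemma comb_lin x v th s t : comb th (lin x v s) (lin x v t) = lin x v (th * s + (1 - th) * t).
Proof. unfold comb, lin; simpl; f_equal; ring. Qed.

Lemma sqn_lin_deriv x v t :
  is_derive (fun s => sqn (lin x v s)) t
    (2 * ((fst x + t * fst v) * fst v + (snd x + t * snd v) * snd v)).
Proof. unfold sqn, lin; simpl. auto_derive; [exact I|ring]. Qed.

Lemma sqn_lin_deriv2 x v t :
  is_derive (fun s => 2 * ((fst x + s * fst v) * fst v + (snd x + s * snd v) * snd v)) t
    (2 * sqn v).
Proof. unfold sqn. auto_derive; [exact I|ring]. Qed.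

Definition Bf (H : R * R -> R) x (v w : R * R) :=
  ha H x * fst v * fst w + hb H x * (fst v * snd w + snd v * fst w) + hd H x * snd v * snd w.

Section S.
Variable H : R * R -> R.
Hypothesis HC2 : C2 H.

Lemma LINE1 x v t : is_derive (fun s => H (lin x v s)) t (Gf H (lin x v t) v).
Proof. apply LINE. apply reg_diff0; exact HC2. Qed.

Lemma LINE2 x v t : is_derive (fun s => Gf H (lin x v s) v) t (Qf H (lin x v t) v).
Proof.
  unfold Gf.
  assert (D1 := LINE (pd1 H) x v t (reg_diff1 H HC2 _)).
  assert (D2 := LINE (pd2 H) x v t (reg_diff2 H HC2 _)).
  rewrite (reg_schwarz H HC2) in D2.
  assert (E : Qf H (lin x v t) v =
     (pd1 (pd1 H) (lin x v t) * fst v + pd2 (pd1 H) (lin x v t) * snd v) * fst v +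
     (pd2 (pd1 H) (lin x v t) * fst v + pd2 (pd2 H) (lin x v t) * snd v) * snd v).
  { unfold Qf, ha, hb, hd. ring. }
  rewrite E.
  apply (dplus (fun s => pd1 H (lin x v s) * fst v) (fun s => pd2 H (lin x v s) * snd v)).
  - apply (dmulc (fun s => pd1 H (lin x v s))). exact D1.
  - apply (dmulc (fun s => pd2 H (lin x v s))). exact D2.
Qed.

Lemma HESS al be (U : R * R -> Prop) x v :
  convex_on U (fun p => al * sqn p + be * H p) ->
  (exists d, 0 < d /\ forall t, 0 <= t < d -> U (lin x v t)) ->
  0 <= 2 * al * sqn v + be * Qf H x v.
Proof.
  intros Hc [d [Hd HU]].
  set (k := fun t => al * sqn (lin x v t) + be * H (lin x v t)).
  set (k' := fun t => al * (2 * ((fst x + t * fst v) * fst v + (snd x + t * snd v) * snd v))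
                     + be * Gf H (lin x v t) v).
  apply (HESS_1D k k' (fun t => U (lin x v t)) d).
  - intros s t th Hs Ht Hth. unfold k.
    rewrite <- comb_lin. apply Hc; assumption.
  - apply HU; lra.
  - exact Hd.
  - intros t Ht; apply HU; lra.
  - intros t _. unfold k, k'.
    apply dplus; apply dcmul. apply sqn_lin_deriv. apply LINE1.
  - unfold k'. eapply deq.
    apply dplus; apply dcmul. apply sqn_lin_deriv2. apply LINE2.
    rewrite lin0. change (al * (2 * sqn v) + be * Qf H x v = 2 * al * sqn v + be * Qf H x v). ring.
Qed.

Lemma LINE2B x v w t : is_derive (fun s => Gf H (lin x v s) w) t (Bf H (lin x v t) v w).
Proof.
  unfold Gf.
  assert (D1 := LINE (pd1 H) x v t (reg_diff1 H HC2 _)).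
  assert (D2 := LINE (pd2 H) x v t (reg_diff2 H HC2 _)).
  rewrite (reg_schwarz H HC2) in D2.
  eapply deq.
  apply (dplus (fun s => pd1 H (lin x v s) * fst w) (fun s => pd2 H (lin x v s) * snd w)).
  - apply (dmulc (fun s => pd1 H (lin x v s))). exact D1.
  - apply (dmulc (fun s => pd2 H (lin x v s))). exact D2.
  - unfold Bf, ha, hb, hd. simpl. ring.
Qed.
End S.

Definition QQ (a b d v1 v2 : R) := a * v1 ^ 2 + 2 * b * v1 * v2 + d * v2 ^ 2.
Definition NN (a b d r1 r2 : R) := d * r1 ^ 2 - 2 * b * r1 * r2 + a * r2 ^ 2.

Section Alg.
Variables a b d lam : R.
Hypothesis Hl : 0 < lam.
Hypothesis HQ : forall v1 v2, lam * (v1 ^ 2 + v2 ^ 2) <= QQ a b d v1 v2.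

Lemma ALG_det : 0 < a * d - b * b.
Proof.
  pose proof (HQ 0 1) as H01. unfold QQ in H01.
  pose proof (HQ d (- b)) as Hdb. unfold QQ in Hdb.
  assert (Hd : lam <= d) by nra.
  assert (E : a * d ^ 2 + 2 * b * d * - b + d * (- b) ^ 2 = d * (a * d - b * b)) by ring.
  rewrite E in Hdb.
  assert (0 < lam * (d ^ 2 + (- b) ^ 2)) by (apply Rmult_lt_0_compat; nra).
  nra.
Qed.

Lemma ALG_N r1 r2 : 0 <= NN a b d r1 r2 /\
  NN a b d r1 r2 / (a * d - b * b) <= (r1 ^ 2 + r2 ^ 2) / lam /\
  ((r1, r2) <> (0, 0) -> 0 < NN a b d r1 r2).
Proof.
  pose proof ALG_det as Hdet.
  set (w1 := d * r1 - b * r2). set (w2 := a * r2 - b * r1).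
  set (det := a * d - b * b) in *.
  assert (E1 : QQ a b d w1 w2 = det * NN a b d r1 r2) by (unfold QQ, NN, w1, w2, det; ring).
  assert (E2 : w1 * r1 + w2 * r2 = NN a b d r1 r2) by (unfold NN, w1, w2; ring).
  pose proof (HQ w1 w2) as Hw. rewrite E1 in Hw.
  assert (HN : 0 <= NN a b d r1 r2).
  { assert (0 <= det * NN a b d r1 r2) by nra.
    apply (Rmult_le_reg_l det); [exact Hdet|]. lra. }
  split; [exact HN|]. split.
  - assert (CS : (w1 * r1 + w2 * r2) ^ 2 <= (w1 ^ 2 + w2 ^ 2) * (r1 ^ 2 + r2 ^ 2)).
    { assert (E3 : (w1 ^ 2 + w2 ^ 2) * (r1 ^ 2 + r2 ^ 2) - (w1 * r1 + w2 * r2) ^ 2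
                  = (w1 * r2 - w2 * r1) ^ 2) by ring.
      pose proof (pow2_ge_0 (w1 * r2 - w2 * r1)). lra. }
    rewrite E2 in CS.
    set (N := NN a b d r1 r2) in *.
    set (S := r1 ^ 2 + r2 ^ 2) in *.
    set (W := w1 ^ 2 + w2 ^ 2) in *.
    assert (HS : 0 <= S) by (unfold S; nra).
    assert (HW : 0 <= W) by (unfold W; nra).
    (* lam * W <= det * N ; N^2 <= W S *)
    assert (Key : lam * N <= det * S).
    { destruct (Rle_lt_or_eq_dec 0 N HN) as [HNp|HN0].
      - assert (lam * N * N <= det * S * N).
        { assert (lam * (N ^ 2) <= lam * (W * S)) by (apply Rmult_le_compat_l; lra).
          assert (lam * W * S <= det * N * S) by (apply Rmult_le_compat_r; [exact HS|exact Hw]).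
          nra. }
        apply (Rmult_le_reg_r N); [exact HNp|]. lra.
      - rewrite <- HN0. assert (0 <= det * S) by (apply Rmult_le_pos; lra). lra. }
    apply (Rmult_le_reg_r (det * lam)); [nra|].
    unfold Rdiv. replace (N * / det * (det * lam)) with (lam * N) by (field; lra).
    replace (S * / lam * (det * lam)) with (det * S) by (field; lra). exact Key.
  - intros Hr.
    destruct (Rle_lt_or_eq_dec 0 _ HN) as [|HN0]; [assumption|exfalso].
    rewrite <- HN0 in Hw. rewrite Rmult_0_r in Hw.
    assert (Hw0 : w1 ^ 2 + w2 ^ 2 <= 0) by nra.
    assert (w1 = 0) by nra. assert (w2 = 0) by nra.
    assert (E4 : det * r1 = a * w1 + b * w2) by (unfold det, w1, w2; ring).
    assert (E5 : det * r2 = b * w1 + d * w2) by (unfold det, w1, w2; ring).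
    assert (r1 = 0).
    { apply (Rmult_eq_reg_l det); [|lra]. rewrite E4. subst w1 w2. rewrite H, H0. ring. }
    assert (r2 = 0).
    { apply (Rmult_eq_reg_l det); [|lra]. rewrite E5. rewrite H, H0. ring. }
    apply Hr. subst. reflexivity.
Qed.
End Alg.

Lemma ALG_CS a b d w1 w2 p1 p2 : 0 <= a * d - b * b ->
  (a * w1 * p1 + b * (w1 * p2 + w2 * p1) + d * w2 * p2) ^ 2 <= QQ a b d w1 w2 * QQ a b d p1 p2.
Proof.
  intros Hdet. unfold QQ.
  assert (E : (a * w1 ^ 2 + 2 * b * w1 * w2 + d * w2 ^ 2) * (a * p1 ^ 2 + 2 * b * p1 * p2 + d * p2 ^ 2)
    - (a * w1 * p1 + b * (w1 * p2 + w2 * p1) + d * w2 * p2) ^ 2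
    = (a * d - b * b) * (w1 * p2 - w2 * p1) ^ 2) by ring.
  assert (0 <= (a * d - b * b) * (w1 * p2 - w2 * p1) ^ 2) by (apply Rmult_le_pos; [lra| apply pow2_ge_0]).
  lra.
Qed.

Lemma Rabs_le_between x b : Rabs x <= b -> - b <= x <= b.
Proof. intros Hx. pose proof (Rabs_pos x). destruct (Rcase_abs x) as [Hn|Hn]; [rewrite Rabs_left in Hx by exact Hn|rewrite Rabs_right in Hx by exact Hn]; lra. Qed.

Lemma NN_expand a b d q1 q2 r1 r2 :
  NN a b d (a * q1 + b * q2 + r1) (b * q1 + d * q2 + r2) =
  (a * d - b * b) * (QQ a b d q1 q2 + 2 * (q1 * r1 + q2 * r2)) + NN a b d r1 r2.
Proof. unfold NN, QQ. ring. Qed.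

Lemma QDIFF A1 B1 D1 A0 B0 D0 e v1 v2 :
  Rabs (A1 - A0) <= e -> Rabs (B1 - B0) <= e -> Rabs (D1 - D0) <= e ->
  Rabs (QQ A1 B1 D1 v1 v2 - QQ A0 B0 D0 v1 v2) <= 2 * e * (v1 ^ 2 + v2 ^ 2).
Proof.
  intros Ha Hb Hd.
  apply Rabs_le_between in Ha. apply Rabs_le_between in Hb. apply Rabs_le_between in Hd.
  unfold QQ. apply Rabs_le.
  set (al := A1 - A0) in *. set (be := B1 - B0) in *. set (de := D1 - D0) in *.
  assert (E : A1 * v1 ^ 2 + 2 * B1 * v1 * v2 + D1 * v2 ^ 2 - (A0 * v1 ^ 2 + 2 * B0 * v1 * v2 + D0 * v2 ^ 2)
     = al * v1 ^ 2 + 2 * be * v1 * v2 + de * v2 ^ 2) by (unfold al, be, de; ring).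
  rewrite E. clearbody al be de.
  assert (P1 : 0 <= (e - al) * v1 ^ 2) by (apply Rmult_le_pos; [lra|apply pow2_ge_0]).
  assert (P2 : 0 <= (e + al) * v1 ^ 2) by (apply Rmult_le_pos; [lra|apply pow2_ge_0]).
  assert (P3 : 0 <= (e - de) * v2 ^ 2) by (apply Rmult_le_pos; [lra|apply pow2_ge_0]).
  assert (P4 : 0 <= (e + de) * v2 ^ 2) by (apply Rmult_le_pos; [lra|apply pow2_ge_0]).
  assert (P5 : 0 <= (e - be) * (v1 + v2) ^ 2) by (apply Rmult_le_pos; [lra|apply pow2_ge_0]).
  assert (P6 : 0 <= (e + be) * (v1 - v2) ^ 2) by (apply Rmult_le_pos; [lra|apply pow2_ge_0]).
  assert (P7 : 0 <= (e + be) * (v1 + v2) ^ 2) by (apply Rmult_le_pos; [lra|apply pow2_ge_0]).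
  assert (P8 : 0 <= (e - be) * (v1 - v2) ^ 2) by (apply Rmult_le_pos; [lra|apply pow2_ge_0]).
  assert (U : 2 * e * (v1 ^ 2 + v2 ^ 2) - (al * v1 ^ 2 + 2 * be * v1 * v2 + de * v2 ^ 2)
    = (e - al) * v1 ^ 2 + (e - de) * v2 ^ 2 + ((e - be) * (v1 + v2) ^ 2 + (e + be) * (v1 - v2) ^ 2) / 2) by field.
  assert (Lo : 2 * e * (v1 ^ 2 + v2 ^ 2) + (al * v1 ^ 2 + 2 * be * v1 * v2 + de * v2 ^ 2)
    = (e + al) * v1 ^ 2 + (e + de) * v2 ^ 2 + ((e + be) * (v1 + v2) ^ 2 + (e - be) * (v1 - v2) ^ 2) / 2) by field.
  split; lra.
Qed.

Lemma AMGM e q1 q2 r1 r2 : 0 < e ->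
  Rabs (2 * (q1 * r1 + q2 * r2)) <= e * (q1 ^ 2 + q2 ^ 2) + (r1 ^ 2 + r2 ^ 2) / e.
Proof.
  intros He. apply Rabs_le.
  assert (A : 0 <= (e * q1 - r1) ^ 2 + (e * q2 - r2) ^ 2) by (apply Rplus_le_le_0_compat; apply pow2_ge_0).
  assert (B : 0 <= (e * q1 + r1) ^ 2 + (e * q2 + r2) ^ 2) by (apply Rplus_le_le_0_compat; apply pow2_ge_0).
  assert (E1 : e * (q1 ^ 2 + q2 ^ 2) + (r1 ^ 2 + r2 ^ 2) / e - 2 * (q1 * r1 + q2 * r2)
    = ((e * q1 - r1) ^ 2 + (e * q2 - r2) ^ 2) / e) by (field; lra).
  assert (E2 : e * (q1 ^ 2 + q2 ^ 2) + (r1 ^ 2 + r2 ^ 2) / e + 2 * (q1 * r1 + q2 * r2)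
    = ((e * q1 + r1) ^ 2 + (e * q2 + r2) ^ 2) / e) by (field; lra).
  assert (0 <= ((e * q1 - r1) ^ 2 + (e * q2 - r2) ^ 2) / e) by (unfold Rdiv; apply Rmult_le_pos; [lra|left; apply Rinv_0_lt_compat; lra]).
  assert (0 <= ((e * q1 + r1) ^ 2 + (e * q2 + r2) ^ 2) / e) by (unfold Rdiv; apply Rmult_le_pos; [lra|left; apply Rinv_0_lt_compat; lra]).
  split; lra.
Qed.

Lemma FINAL0 Hq quad S Q0 Qq qr NR R2 lam e eps :
  0 < S -> 0 < lam -> 0 < e -> e <= 1 -> 0 < eps ->
  e * (23 + 16 / lam) <= lam * Rmin (1 / 2) eps / 2 ->
  Rabs (2 * Hq - Q0) <= 4 * e * S ->
  Rabs (Qq - Q0) <= 2 * e * S ->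
  quad = Qq + qr + NR ->
  0 <= NR -> NR <= R2 / lam ->
  R2 <= 16 * e ^ 2 * S ->
  Rabs qr <= e * S + R2 / e ->
  lam * S <= 2 * Hq ->
  Rabs (Hq / quad - 1 / 2) < eps.
Proof.
  intros HS Hl He He1 Heps HK H2H HQ Equad HN0 HN1 HR2 Hqr HH.
  pose proof (Rmin_l (1/2) eps) as M1. pose proof (Rmin_r (1/2) eps) as M2.
  set (m := Rmin (1/2) eps) in *.
  assert (Hm : 0 < m) by (unfold m; apply Rmin_pos; lra).
  assert (R2e : R2 / e <= 16 * e * S).
  { apply (Rmult_le_reg_r e); [lra|]. replace (R2 / e * e) with R2 by (field; lra). nra. }
  assert (R2l : R2 / lam <= 16 * e ^ 2 * S / lam).
  { unfold Rdiv. apply Rmult_le_compat_r; [left; apply Rinv_0_lt_compat; lra|lra]. }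
  assert (e2 : 16 * e ^ 2 * S / lam <= 16 * e * S / lam).
  { unfold Rdiv. apply Rmult_le_compat_r; [left; apply Rinv_0_lt_compat; lra|]. assert (Hx : 16 * e * S - 16 * e ^ 2 * S = 16 * S * e * (1 - e)) by ring. assert (0 <= 16 * S * e * (1 - e)) by (repeat apply Rmult_le_pos; lra). lra. }
  apply Rabs_le_between in H2H. apply Rabs_le_between in HQ. apply Rabs_le_between in Hqr.
  set (D := e * (23 + 16 / lam) * S).
  assert (ED : D = 23 * e * S + 16 * e * S / lam) by (unfold D; field; lra).
  assert (Hdiff : Rabs (quad - 2 * Hq) <= D).
  { apply Rabs_le. split; lra. }
  assert (HD : D <= lam * m / 2 * S) by (unfold D; apply Rmult_le_compat_r; lra).
  assert (Hquad : lam / 2 * S <= quad).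
  { apply Rabs_le_between in Hdiff. assert (lam * m / 2 * S <= lam / 4 * S) by nra. nra. }
  assert (Hqp : 0 < quad) by nra.
  replace (Hq / quad - 1 / 2) with ((2 * Hq - quad) / (2 * quad)) by (field; lra).
  assert (Hlt : lam * m / 2 * S < eps * (2 * quad)).
  { assert (eps * (lam * S) <= eps * (2 * quad)) by (apply Rmult_le_compat_l; lra).
    assert (lam * m / 2 * S < eps * (lam * S)).
    { assert (0 < lam * S) by nra. nra. }
    lra. }
  apply Rabs_le_between in Hdiff.
  apply Rabs_def1.
  - apply (Rmult_lt_reg_r (2 * quad)); [lra|].
    replace ((2 * Hq - quad) / (2 * quad) * (2 * quad)) with (2 * Hq - quad) by (field; lra). lra.
  - apply (Rmult_lt_reg_r (2 * quad)); [lra|].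
    replace ((2 * Hq - quad) / (2 * quad) * (2 * quad)) with (2 * Hq - quad) by (field; lra). lra.
Qed.

Lemma BND A A0 Aq B B0 Bq e v1 v2 :
  Rabs (A - A0) <= e -> Rabs (Aq - A0) <= e -> Rabs (B - B0) <= e -> Rabs (Bq - B0) <= e ->
  Rabs ((A - Aq) * v1 + (B - Bq) * v2) <= 2 * e * (Rabs v1 + Rabs v2).
Proof.
  intros H1 H2 H3 H4.
  assert (T1 : Rabs (A - Aq) <= 2 * e).
  { replace (A - Aq) with ((A - A0) - (Aq - A0)) by ring.
    eapply Rle_trans; [apply Rabs_triang|]. rewrite Rabs_Ropp. lra. }
  assert (T2 : Rabs (B - Bq) <= 2 * e).
  { replace (B - Bq) with ((B - B0) - (Bq - B0)) by ring.
    eapply Rle_trans; [apply Rabs_triang|]. rewrite Rabs_Ropp. lra. }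
  eapply Rle_trans; [apply Rabs_triang|]. rewrite !Rabs_mult.
  pose proof (Rabs_pos v1). pose proof (Rabs_pos v2).
  pose proof (Rabs_pos (A - Aq)). pose proof (Rabs_pos (B - Bq)).
  assert (Rabs (A - Aq) * Rabs v1 <= 2 * e * Rabs v1) by (apply Rmult_le_compat_r; lra).
  assert (Rabs (B - Bq) * Rabs v2 <= 2 * e * Rabs v2) by (apply Rmult_le_compat_r; lra).
  lra.
Qed.

Lemma SQB r c v1 v2 : Rabs r <= c * (Rabs v1 + Rabs v2) -> 0 <= c ->
  r ^ 2 <= 2 * c ^ 2 * (v1 ^ 2 + v2 ^ 2).
Proof.
  intros Hr Hc.
  pose proof (Rabs_pos r). pose proof (Rabs_pos v1). pose proof (Rabs_pos v2).
  assert (E1 : r ^ 2 = Rabs r ^ 2) by (rewrite <- (pow2_abs r); reflexivity).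
  assert (E2 : v1 ^ 2 = Rabs v1 ^ 2) by (rewrite <- (pow2_abs v1); reflexivity).
  assert (E3 : v2 ^ 2 = Rabs v2 ^ 2) by (rewrite <- (pow2_abs v2); reflexivity).
  rewrite E1, E2, E3.
  assert (Rabs r ^ 2 <= (c * (Rabs v1 + Rabs v2)) ^ 2).
  { apply pow_incr. split; assumption. }
  assert (0 <= (Rabs v1 - Rabs v2) ^ 2) by apply pow2_ge_0.
  assert (0 <= c ^ 2) by apply pow2_ge_0.
  assert ((c * (Rabs v1 + Rabs v2)) ^ 2 <= 2 * c ^ 2 * (Rabs v1 ^ 2 + Rabs v2 ^ 2)).
  { assert (Ex : 2 * c ^ 2 * (Rabs v1 ^ 2 + Rabs v2 ^ 2) - (c * (Rabs v1 + Rabs v2)) ^ 2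
          = c ^ 2 * (Rabs v1 - Rabs v2) ^ 2) by ring.
    assert (0 <= c ^ 2 * (Rabs v1 - Rabs v2) ^ 2) by (apply Rmult_le_pos; assumption).
    lra. }
  lra.
Qed.

Definition ball2 (M : R) (p : R * R) : Prop := sqn p <= M.

Lemma sqn_comb t p q : 0 <= t <= 1 -> sqn (comb t p q) <= t * sqn p + (1 - t) * sqn q.
Proof.
  intros Ht. unfold sqn, comb; simpl.
  assert (E : t * (fst p ^ 2 + snd p ^ 2) + (1 - t) * (fst q ^ 2 + snd q ^ 2)
    - ((t * fst p + (1 - t) * fst q) ^ 2 + (t * snd p + (1 - t) * snd q) ^ 2)
    = t * (1 - t) * ((fst p - fst q) ^ 2 + (snd p - snd q) ^ 2)) by ring.
  assert (0 <= t * (1 - t) * ((fst p - fst q) ^ 2 + (snd p - snd q) ^ 2)).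
  { apply Rmult_le_pos. apply Rmult_le_pos; lra. apply Rplus_le_le_0_compat; apply pow2_ge_0. }
  lra.
Qed.

Lemma ball2_convex M : convex_set (ball2 M).
Proof.
  intros p q t Hp Hq Ht. unfold ball2 in *.
  pose proof (sqn_comb t p q Ht). nra.
Qed.

Lemma ball2_bounded M : bounded_set (ball2 M).
Proof. exists M. intros p Hp. exact Hp. Qed.

Lemma convex_on_ext U (f g : R * R -> R) :
  (forall p, f p = g p) -> convex_on U f -> convex_on U g.
Proof. intros E Hc p q t Hp Hq Ht. rewrite <- !E. apply Hc; auto. Qed.

Lemma sqn_nonneg p : 0 <= sqn p.
Proof. unfold sqn. nra. Qed.

Lemma lin_cont_sqn x v : continuous (fun t => sqn (lin x v t)) 0.
Proof. eapply dcont. apply sqn_lin_deriv. Qed.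

Lemma lin_in_ball x v M : sqn x < M ->
  exists d, 0 < d /\ forall t, 0 <= t < d -> ball2 M (lin x v t).
Proof.
  intros Hx.
  destruct (CONT_LT (fun t => sqn (lin x v t)) 0 M (lin_cont_sqn x v)) as [d [Hd Hk]].
  { rewrite lin0. exact Hx. }
  exists d. split; [exact Hd|]. intros t Ht. unfold ball2.
  apply Rlt_le. apply Hk. rewrite Rminus_0_r, Rabs_pos_eq; lra.
Qed.

Lemma lin00 q t : lin (0, 0) q t = (t * fst q, t * snd q).
Proof. unfold lin; simpl; f_equal; ring. Qed.

Lemma comb_0 t q : comb t q (0, 0) = lin (0, 0) q t.
Proof. unfold comb, lin; simpl; f_equal; ring. Qed.

Lemma sqn_scale t q : sqn (lin (0, 0) q t) = t ^ 2 * sqn q.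
Proof. unfold sqn, lin; simpl; ring. Qed.

Lemma lin01 q : lin (0, 0) q 1 = q.
Proof. destruct q; unfold lin; simpl; f_equal; ring. Qed.

Section G.
Variable H : R * R -> R.
Hypothesis HC2 : C2 H.
Hypothesis HH1 : H1 H.
Hypothesis HH2 : H2 H.

Lemma Hnn p : 0 <= H p.
Proof. destruct HH2 as [_ h]. apply h. Qed.
Lemma H00 : H (0, 0) = 0.
Proof. destruct HH2 as [h _]. exact h. Qed.

Lemma H1_ball M : exists lam Lam, 0 < lam /\ 0 < Lam /\
  convex_on (ball2 M) (fun p => (- (lam / 2)) * sqn p + 1 * H p) /\
  convex_on (ball2 M) (fun p => (Lam / 2) * sqn p + (-1) * H p).
Proof.
  destruct HH1 as [Hv Hc].
  destruct (Hv (ball2 M) (ball2_bounded M) (ball2_convex M)) as [lam [Hl Cl]].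
  destruct (Hc (ball2 M) (ball2_bounded M) (ball2_convex M)) as [Lam [HL CL]].
  exists lam, Lam. split; [exact Hl|]. split; [exact HL|]. split.
  - eapply convex_on_ext; [|exact Cl]. intros p; simpl; ring.
  - eapply convex_on_ext; [|exact CL]. intros p; simpl; ring.
Qed.

Lemma HESS_ball M : exists lam Lam, 0 < lam /\ 0 < Lam /\
  (forall p, sqn p <= M -> lam / 2 * sqn p <= H p) /\
  (forall p s, sqn p <= M -> 0 <= s <= 1 -> H (lin (0, 0) p s) <= s * H p) /\
  forall x v, sqn x < M -> lam * sqn v <= Qf H x v <= Lam * sqn v.
Proof.
  destruct (H1_ball M) as [lam [Lam [Hl [HL [Cl CL]]]]].
  exists lam, Lam. split; [exact Hl|]. split; [exact HL|].
  assert (Hdisc : forall p s, sqn p <= M -> 0 <= s <= 1 ->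
     H (lin (0, 0) p s) - lam / 2 * s ^ 2 * sqn p <= s * (H p - lam / 2 * sqn p)).
  { intros p s Hp Hs.
    assert (B0 : ball2 M (0, 0)).
    { unfold ball2, sqn; simpl. pose proof (sqn_nonneg p). lra. }
    pose proof (Cl p (0, 0) s Hp B0 Hs) as C. simpl in C.
    rewrite comb_0, sqn_scale, H00 in C.
    replace (sqn (0, 0)) with 0 in C by (unfold sqn; simpl; ring). nra. }
  split; [|split].
  - intros p Hp.
    destruct (Rle_or_lt (lam / 2 * sqn p) (H p)) as [|Hlt]; [assumption|exfalso].
    pose proof (sqn_nonneg p).
    assert (Hs : 0 < sqn p).
    { destruct (Rle_lt_or_eq_dec 0 (sqn p) H0) as [|E]; [assumption|].
      rewrite <- E in Hlt. pose proof (Hnn p). lra. }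
    set (X := lam / 2 * sqn p - H p).
    set (s := Rmin 1 (X / (lam * sqn p))).
    assert (HX : 0 < X) by (unfold X; lra).
    assert (Hs1 : 0 < s).
    { unfold s. apply Rmin_pos; [lra|]. apply Rdiv_lt_0_compat; [lra|nra]. }
    assert (Hs2 : s <= 1) by (unfold s; apply Rmin_l).
    assert (Hs3 : s * (lam * sqn p) <= X).
    { pose proof (Rmin_r 1 (X / (lam * sqn p))) as Hm. fold s in Hm.
      assert (Hm2 : s * (lam * sqn p) <= X / (lam * sqn p) * (lam * sqn p)).
      { apply Rmult_le_compat_r; [nra|]. exact Hm. }
      replace (X / (lam * sqn p) * (lam * sqn p)) with X in Hm2 by (field; nra). exact Hm2. }
    pose proof (Hdisc p s Hp (conj (Rlt_le _ _ Hs1) Hs2)).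
    pose proof (Hnn (lin (0, 0) p s)).
    assert (s * (H p - lam / 2 * sqn p) >= - lam / 2 * s ^ 2 * sqn p) by nra.
    assert (H p - lam / 2 * sqn p >= - lam / 2 * s * sqn p).
    { apply Rle_ge. apply (Rmult_le_reg_l s); [lra|]. nra. }
    unfold X in Hs3. nra.
  - intros p s Hp Hs.
    pose proof (Hdisc p s Hp Hs). pose proof (sqn_nonneg p).
    assert (0 <= lam / 2 * s * (1 - s) * sqn p).
    { apply Rmult_le_pos; [|lra]. apply Rmult_le_pos; [|lra]. nra. }
    nra.
  - intros x v Hx.
    destruct (lin_in_ball x v M Hx) as [d [Hd Hin]].
    pose proof (HESS H HC2 _ _ _ x v Cl (ex_intro _ d (conj Hd Hin))).
    pose proof (HESS H HC2 _ _ _ x v CL (ex_intro _ d (conj Hd Hin))).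
    split; nra.
Qed.

Lemma DISC_gen (U : R * R -> Prop) lam p : 0 < lam -> U p -> U (0, 0) ->
  convex_on U (fun p => - (lam / 2) * sqn p + 1 * H p) -> lam / 2 * sqn p <= H p.
Proof.
  intros Hl Hp B0 Cl.
  assert (Hdisc : forall s, 0 <= s <= 1 ->
     H (lin (0, 0) p s) - lam / 2 * s ^ 2 * sqn p <= s * (H p - lam / 2 * sqn p)).
  { intros s Hs.
    pose proof (Cl p (0, 0) s Hp B0 Hs) as C. simpl in C.
    rewrite comb_0, sqn_scale, H00 in C.
    replace (sqn (0, 0)) with 0 in C by (unfold sqn; simpl; ring). nra. }
  destruct (Rle_or_lt (lam / 2 * sqn p) (H p)) as [|Hlt]; [assumption|exfalso].
  pose proof (sqn_nonneg p) as H0.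
  assert (Hs : 0 < sqn p).
  { destruct (Rle_lt_or_eq_dec 0 (sqn p) H0) as [|E]; [assumption|].
    rewrite <- E in Hlt. pose proof (Hnn p). lra. }
  set (X := lam / 2 * sqn p - H p).
  set (s := Rmin 1 (X / (lam * sqn p))).
  assert (HX : 0 < X) by (unfold X; lra).
  assert (Hs1 : 0 < s).
  { unfold s. apply Rmin_pos; [lra|]. apply Rdiv_lt_0_compat; [lra|nra]. }
  assert (Hs2 : s <= 1) by (unfold s; apply Rmin_l).
  assert (Hs3 : s * (lam * sqn p) <= X).
  { pose proof (Rmin_r 1 (X / (lam * sqn p))) as Hm. fold s in Hm.
    assert (Hm2 : s * (lam * sqn p) <= X / (lam * sqn p) * (lam * sqn p)).
    { apply Rmult_le_compat_r; [nra|]. exact Hm. }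
    replace (X / (lam * sqn p) * (lam * sqn p)) with X in Hm2 by (field; nra). exact Hm2. }
  pose proof (Hdisc s (conj (Rlt_le _ _ Hs1) Hs2)).
  pose proof (Hnn (lin (0, 0) p s)).
  assert (s * (H p - lam / 2 * sqn p) >= - lam / 2 * s ^ 2 * sqn p) by nra.
  assert (H p - lam / 2 * sqn p >= - lam / 2 * s * sqn p).
  { apply Rle_ge. apply (Rmult_le_reg_l s); [lra|]. nra. }
  unfold X in Hs3. nra.
Qed.

Lemma sqn_pos q : q <> (0, 0) -> 0 < sqn q.
Proof.
  intros Hq. destruct q as [q1 q2]. unfold sqn; simpl.
  destruct (Req_dec q1 0) as [E1|E1].
  - destruct (Req_dec q2 0) as [E2|E2].
    + subst. exfalso. apply Hq. reflexivity.
    + assert (0 < q2 ^ 2) by (apply pow2_gt_0; exact E2). nra.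
  - assert (0 < q1 ^ 2) by (apply pow2_gt_0; exact E1). nra.
Qed.

Lemma Gf0_nonneg v : 0 <= Gf H (0, 0) v.
Proof.
  assert (D : is_derive (fun t => - H (lin (0, 0) v t)) 0 (- Gf H (lin (0, 0) v 0) v)).
  { exact (is_derive_opp _ _ _ (LINE1 H HC2 (0, 0) v 0)). }
  rewrite lin0 in D.
  pose proof (RLIM _ _ 0 1 D Rlt_0_1) as R0.
  assert (- Gf H (0, 0) v <= 0); [|lra].
  apply R0. intros th _. rewrite lin0, H00. pose proof (Hnn (lin (0, 0) v th)). lra.
Qed.

Lemma grad0 : pd1 H (0, 0) = 0 /\ pd2 H (0, 0) = 0.
Proof.
  pose proof (Gf0_nonneg (1, 0)). pose proof (Gf0_nonneg (-1, 0)).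
  pose proof (Gf0_nonneg (0, 1)). pose proof (Gf0_nonneg (0, -1)).
  unfold Gf in *; simpl in *. split; lra.
Qed.

Lemma Gf_pos q : q <> (0, 0) -> 0 < Gf H q q.
Proof.
  intros Hq. pose proof (sqn_pos q Hq) as Hs.
  destruct (H1_ball (sqn q + 1)) as [lam [Lam [Hl [HL [Cl CL]]]]].
  set (k := fun t => - (lam / 2) * sqn (lin (0, 0) q t) + 1 * H (lin (0, 0) q t)).
  assert (Hc : cvx1 k (fun t => ball2 (sqn q + 1) (lin (0, 0) q t))).
  { intros s t th Hs' Ht' Hth. unfold k. rewrite <- comb_lin. apply Cl; assumption. }
  assert (D : is_derive k 1 (- (lam / 2) * (2 * ((fst (0, 0) + 1 * fst q) * fst q + (snd (0, 0) + 1 * snd q) * snd q))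
                             + 1 * Gf H (lin (0, 0) q 1) q)).
  { unfold k. apply dplus; apply dcmul. apply sqn_lin_deriv. apply LINE1; exact HC2. }
  assert (I1 : ball2 (sqn q + 1) (lin (0, 0) q 1)) by (rewrite lin01; unfold ball2; lra).
  assert (I0 : ball2 (sqn q + 1) (lin (0, 0) q 0)).
  { rewrite lin0. unfold ball2. pose proof (sqn_nonneg q). replace (sqn (0, 0)) with 0 by (unfold sqn; simpl; ring). lra. }
  pose proof (CVX_SLOPE k _ 1 0 _ Hc I1 I0 D) as S.
  unfold k in S. rewrite lin0, lin01, H00 in S. simpl in S.
  assert (Hdisc : lam / 2 * sqn q <= H q).
  { apply (DISC_gen (ball2 (sqn q + 1))); auto.
    unfold ball2; lra. unfold ball2. pose proof (sqn_nonneg q). replace (sqn (0, 0)) with 0 by (unfold sqn; simpl; ring). lra. }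
  replace (sqn (0, 0)) with 0 in S by (unfold sqn; simpl; ring).
  replace ((0 + 1 * fst q) * fst q + (0 + 1 * snd q) * snd q) with (sqn q) in S by (unfold sqn; ring).
  nra.
Qed.

Lemma tau_eq p : p <> (0, 0) -> tau_tilde H p = H p / inv_hess_quad H p.
Proof.
  intros Hp. destruct p as [p1 p2]. unfold tau_tilde; simpl.
  destruct (Req_EM_T p1 0) as [E1|E1]; [|reflexivity].
  destruct (Req_EM_T p2 0) as [E2|E2]; [|reflexivity].
  subst. exfalso; apply Hp; reflexivity.
Qed.

Lemma quad_eq p : inv_hess_quad H p =
  NN (ha H p) (hb H p) (hd H p) (pd1 H p) (pd2 H p) / (ha H p * hd H p - hb H p * hb H p).
Proof.
  unfold inv_hess_quad, NN, ha, hb, hd. rewrite (reg_schwarz H HC2). cbv zeta.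
  f_equal; ring.
Qed.

Lemma Qf_QQ x v : Qf H x v = QQ (ha H x) (hb H x) (hd H x) (fst v) (snd v).
Proof. unfold Qf, QQ. ring. Qed.

Lemma hess_pd x : exists lam, 0 < lam /\ forall v1 v2,
  lam * (v1 ^ 2 + v2 ^ 2) <= QQ (ha H x) (hb H x) (hd H x) v1 v2.
Proof.
  destruct (HESS_ball (sqn x + 1)) as [lam [Lam [Hl [HL [_ [_ Hb]]]]]].
  exists lam. split; [exact Hl|]. intros v1 v2.
  destruct (Hb x (v1, v2) ltac:(lra)) as [B _]. rewrite Qf_QQ in B. unfold sqn in B; simpl in B. exact B.
Qed.

Lemma quad_pos p : p <> (0, 0) -> 0 < inv_hess_quad H p /\ 0 < ha H p * hd H p - hb H p * hb H p /\ 0 < NN (ha H p) (hb H p) (hd H p) (pd1 H p) (pd2 H p).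
Proof.
  intros Hp. destruct (hess_pd p) as [lam [Hl HQ]].
  pose proof (ALG_det _ _ _ lam Hl HQ) as Hdet.
  destruct (ALG_N _ _ _ lam Hl HQ (pd1 H p) (pd2 H p)) as [_ [_ Hpos]].
  assert (HN : 0 < NN (ha H p) (hb H p) (hd H p) (pd1 H p) (pd2 H p)).
  { apply Hpos. intros E. injection E as E1 E2.
    pose proof (Gf_pos p Hp) as G. unfold Gf in G. rewrite E1, E2 in G. lra. }
  rewrite quad_eq. split; [|split; assumption].
  apply Rdiv_lt_0_compat; assumption.
Qed.
End G.

Section F.
Variable H : R * R -> R.
Hypothesis HC2 : C2 H.
Hypothesis HH1 : H1 H.
Hypothesis HH2 : H2 H.

Lemma cont_line x v : continuous (fun t => H (lin x v t)) 0.
Proof. eapply dcont. apply LINE1; exact HC2. Qed.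

Lemma near_sublev p v c : H p < c ->
  exists d, 0 < d /\ forall t, 0 <= t < d -> sublev_lt H c (lin p v t).
Proof.
  intros Hp.
  destruct (CONT_LT (fun t => H (lin p v t)) 0 c (cont_line p v)) as [d [Hd Hk]].
  { rewrite lin0. exact Hp. }
  exists d. split; [exact Hd|]. intros t Ht. split.
  - apply (Hnn H HH2).
  - apply Hk. rewrite Rminus_0_r, Rabs_pos_eq; lra.
Qed.

Lemma core_i p e1 e2 l L : p <> (0, 0) -> 0 < e1 -> 0 < e2 ->
  0 < l -> convex_on (sublev_lt H (H p + e1)) (fun q => H q - l / 2 * sqn q) ->
  0 < L -> convex_on (sublev_lt H (H p + e2)) (fun q => L / 2 * sqn q - H q) ->
  1 / 2 * (l / L) ^ 2 <= tau_tilde H p.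
Proof.
  intros Hp He1 He2 Hl Cl HL CL.
  assert (C1 : convex_on (sublev_lt H (H p + e1)) (fun q => - (l / 2) * sqn q + 1 * H q)).
  { eapply convex_on_ext; [|exact Cl]. intros q; simpl; ring. }
  assert (C2' : convex_on (sublev_lt H (H p + e2)) (fun q => (L / 2) * sqn q + (-1) * H q)).
  { eapply convex_on_ext; [|exact CL]. intros q; simpl; ring. }
  assert (Hdisc : l / 2 * sqn p <= H p).
  { apply (DISC_gen H HH2 (sublev_lt H (H p + e1))); auto.
    - split; [apply (Hnn H HH2)|lra].
    - split; rewrite (H00 H HH2); [lra|]. pose proof (Hnn H HH2 p). lra. }
  assert (HQ : forall v1 v2, l * (v1 ^ 2 + v2 ^ 2) <= QQ (ha H p) (hb H p) (hd H p) v1 v2).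
  { intros v1 v2.
    destruct (near_sublev p (v1, v2) (H p + e1) ltac:(lra)) as [d [Hd Hin]].
    pose proof (HESS H HC2 _ _ _ p (v1, v2) C1 (ex_intro _ d (conj Hd Hin))) as Hh.
    rewrite (Qf_QQ H) in Hh. unfold sqn in Hh; simpl in Hh. lra. }
  set (g1 := pd1 H p). set (g2 := pd2 H p).
  destruct (ALG_N _ _ _ l Hl HQ g1 g2) as [_ [Hqb _]].
  destruct (quad_pos H HC2 HH1 HH2 p Hp) as [Hq [Hdet HN]].
  assert (Hg : g1 ^ 2 + g2 ^ 2 <= L ^ 2 * sqn p).
  { set (g := (g1, g2)).
    destruct (MVT_gen (fun t => Gf H (lin (0, 0) p t) g) 0 1 (fun t => Bf H (lin (0, 0) p t) p g))
      as [c [Hc Ec]].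
    - intros x _. apply LINE2B; exact HC2.
    - intros x _. apply continuity_pt_filterlim. eapply dcont. apply LINE2B; exact HC2.
    - rewrite Rmin_left in Hc by lra. rewrite Rmax_right in Hc by lra.
      rewrite lin0, lin01 in Ec.
      destruct (grad0 H HC2 HH2) as [G1 G2].
      unfold Gf in Ec. rewrite G1, G2 in Ec. fold g1 g2 in Ec. unfold g in Ec; simpl in Ec.
      set (xc := lin (0, 0) p c) in *.
      destruct (HESS_ball H HC2 HH1 HH2 (sqn p)) as [lb [Lb [Hlb [HLb [_ [Hseg _]]]]]].
      assert (Hxc : H xc < H p + e2).
      { pose proof (Hseg p c ltac:(lra) Hc). pose proof (Hnn H HH2 p). unfold xc. nra. }
      assert (HU : forall v, Qf H xc v <= L * sqn v).
      { intros v.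
        destruct (near_sublev xc v (H p + e2) Hxc) as [d [Hd Hin]].
        pose proof (HESS H HC2 _ _ _ xc v C2' (ex_intro _ d (conj Hd Hin))). lra. }
      destruct (hess_pd H HC2 HH1 HH2 xc) as [lc [Hlc HQc]].
      pose proof (ALG_det _ _ _ lc Hlc HQc) as Hdc.
      pose proof (ALG_CS (ha H xc) (hb H xc) (hd H xc) g1 g2 (fst p) (snd p) ltac:(lra)) as CS.
      pose proof (HU g) as U1. pose proof (HU p) as U2.
      rewrite (Qf_QQ H) in U1, U2. unfold g in U1; simpl in U1.
      pose proof (HQc g1 g2) as P1. pose proof (HQc (fst p) (snd p)) as P2.
      assert (EB : Bf H xc p (g1, g2) = ha H xc * g1 * fst p + hb H xc * (g1 * snd p + g2 * fst p) + hd H xc * g2 * snd p).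
      { unfold Bf; simpl. ring. }
      rewrite EB in Ec.
      assert (E2 : g1 * g1 + g2 * g2 = ha H xc * g1 * fst p + hb H xc * (g1 * snd p + g2 * fst p) + hd H xc * g2 * snd p) by lra.
      rewrite <- E2 in CS.
      set (G := g1 ^ 2 + g2 ^ 2) in *.
      assert (EG : g1 * g1 + g2 * g2 = G) by (unfold G; ring). rewrite EG in CS.
      assert (HG : 0 <= G) by (unfold G; nra).
      pose proof (sqn_nonneg p) as Hsp.
      assert (Hsq : sqn p = fst p ^ 2 + snd p ^ 2) by reflexivity.
      assert (CS2 : G ^ 2 <= (L * G) * (L * sqn p)).
      { eapply Rle_trans; [exact CS|]. rewrite Hsq.
        apply Rmult_le_compat. nra. nra. exact U1. exact U2. }
      destruct (Rle_lt_or_eq_dec 0 G HG) as [HGp|HG0].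
      + apply (Rmult_le_reg_l G); [exact HGp|]. nra.
      + rewrite <- HG0. nra. }
  rewrite (tau_eq H p Hp).
  rewrite (quad_eq H HC2) in Hq |- *.
  set (qd := NN (ha H p) (hb H p) (hd H p) (pd1 H p) (pd2 H p) / (ha H p * hd H p - hb H p * hb H p)) in *.
  fold g1 g2 in qd. 
  assert (Hqd : qd <= L ^ 2 * sqn p / l).
  { apply (Rle_trans _ _ _ Hqb). unfold Rdiv. apply Rmult_le_compat_r; [left; apply Rinv_0_lt_compat; lra|]. exact Hg. }
  apply (Rmult_le_reg_r qd); [exact Hq|].
  replace (H p / qd * qd) with (H p) by (field; lra).
  assert (1 / 2 * (l / L) ^ 2 * qd <= 1 / 2 * (l / L) ^ 2 * (L ^ 2 * sqn p / l)).
  { apply Rmult_le_compat_l; [nra|exact Hqd]. }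
  replace (1 / 2 * (l / L) ^ 2 * (L ^ 2 * sqn p / l)) with (l / 2 * sqn p) in H0 by (field; lra).
  lra.
Qed.
End F.

Lemma RBAR (X : R) (P1 P2 : R -> R -> Prop) :
  0 < X -> (forall e l, P1 e l -> 0 < l) -> (forall e L, P2 e L -> 0 < L) ->
  (forall e1 e2 l L, 0 < e1 -> 0 < e2 -> P1 e1 l -> P2 e2 L -> 1 / 2 * (l / L) ^ 2 <= X) ->
  1 / 2 * (real (Rbar_lub (fun x => exists e, 0 < e /\ x = Lub_Rbar (P1 e))) /
           real (Rbar_glb (fun x => exists e, 0 < e /\ x = Glb_Rbar (P2 e)))) ^ 2 <= X.
Proof.
  intros HX HP1 HP2 Hk.
  set (s := sqrt (2 * X)).
  assert (Hs : 0 < s) by (apply sqrt_lt_R0; lra).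
  assert (Hs2 : s * s = 2 * X) by (apply sqrt_sqrt; lra).
  assert (Hadm : forall e1 e2 l L, 0 < e1 -> 0 < e2 -> P1 e1 l -> P2 e2 L -> l <= s * L).
  { intros e1 e2 l L He1 He2 H1 H2.
    pose proof (Hk e1 e2 l L He1 He2 H1 H2) as K.
    pose proof (HP1 _ _ H1). pose proof (HP2 _ _ H2).
    assert (Hr : 0 < l / L) by (apply Rdiv_lt_0_compat; lra).
    assert (Hr2 : l / L <= s).
    { destruct (Rle_or_lt (l / L) s) as [|Hlt]; [assumption|].
      assert (s * s < (l / L) * (l / L)) by (apply Rmult_le_0_lt_compat; lra). nra. }
    apply (Rmult_le_reg_r (/ L)); [apply Rinv_0_lt_compat; lra|].
    replace (s * L * / L) with s by (field; lra). exact Hr2. }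
  assert (Z : forall y, 1 / 2 * (0 / y) ^ 2 <= X).
  { intros y. unfold Rdiv. rewrite Rmult_0_l. simpl. lra. }
  unfold Rbar_lub. destruct (Rbar_ex_lub _) as [lu [Hub Hleast]]. simpl.
  destruct lu as [lr| |]; [|apply Z|apply Z].
  unfold Rbar_glb. destruct (Rbar_ex_glb _) as [gu [Hlb Hgreat]]. simpl.
  destruct gu as [Lr| |];
    [| simpl; unfold Rdiv; rewrite Rinv_0, Rmult_0_r; simpl; lra | simpl; unfold Rdiv; rewrite Rinv_0, Rmult_0_r; simpl; lra].
  assert (Ex1 : exists e l, 0 < e /\ P1 e l).
  { apply NNPP. intros Hn.
    assert (Rbar_le (Finite lr) m_infty); [|simpl in *; tauto].
    apply Hleast. intros x [e [He Ex]]. subst x.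
    destruct (Lub_Rbar_correct (P1 e)) as [_ Hl]. apply Hl.
    intros l Hl1. exfalso. apply Hn. exists e, l. auto. }
  assert (Ex2 : exists e L, 0 < e /\ P2 e L).
  { apply NNPP. intros Hn.
    assert (Rbar_le p_infty (Finite Lr)); [|simpl in *; tauto].
    apply Hgreat. intros x [e [He Ex]]. subst x.
    destruct (Glb_Rbar_correct (P2 e)) as [_ Hl]. apply Hl.
    intros l Hl1. exfalso. apply Hn. exists e, l. auto. }
  destruct Ex1 as [e0 [l0 [He0 Hl0]]].
  destruct Ex2 as [e0' [L0 [He0' HL0]]].
  assert (Hlr : l0 <= lr).
  { assert (A1 : Rbar_le (Finite l0) (Lub_Rbar (P1 e0))).
    { destruct (Lub_Rbar_correct (P1 e0)) as [U _]. apply U. exact Hl0. }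
    assert (A2 : Rbar_le (Lub_Rbar (P1 e0)) (Finite lr)).
    { apply Hub. exists e0. auto. }
    exact (Rbar_le_trans _ _ _ A1 A2). }
  pose proof (HP1 _ _ Hl0) as Hl0p.
  assert (HC : forall e2 L, 0 < e2 -> P2 e2 L -> lr <= s * L).
  { intros e2 L He2 HL.
    assert (Rbar_le (Finite lr) (Finite (s * L))); [|simpl in *; lra].
    apply Hleast. intros x [e [He Ex]]. subst x.
    destruct (Lub_Rbar_correct (P1 e)) as [_ Hl]. apply Hl.
    intros l Hl1. simpl. exact (Hadm e e2 l L He He2 Hl1 HL). }
  assert (HD : lr / s <= Lr).
  { assert (Rbar_le (Finite (lr / s)) (Finite Lr)); [|simpl in *; lra].
    apply Hgreat. intros x [e [He Ex]]. subst x.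
    destruct (Glb_Rbar_correct (P2 e)) as [_ Hl]. apply Hl.
    intros L HL. simpl. pose proof (HC e L He HL).
    apply (Rmult_le_reg_l s); [exact Hs|]. replace (s * (lr / s)) with lr by (field; lra). lra. }
  assert (HLr : 0 < Lr).
  { assert (0 < lr / s) by (apply Rdiv_lt_0_compat; lra). lra. }
  assert (Hq : lr / Lr <= s).
  { apply (Rmult_le_reg_r Lr); [exact HLr|].
    replace (lr / Lr * Lr) with lr by (field; lra).
    apply (Rmult_le_reg_r (/ s)); [apply Rinv_0_lt_compat; lra|].
    replace (s * Lr * / s) with Lr by (field; lra). exact HD. }
  assert (Hq0 : 0 < lr / Lr) by (apply Rdiv_lt_0_compat; lra).
  assert ((lr / Lr) ^ 2 <= s * s) by nra.
  simpl. apply Rle_trans with (1 / 2 * (2 * X)); [|lra]. apply Rmult_le_compat_l; [lra|]. nra.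
Qed.

Section K.
Variable H : R * R -> R.
Hypothesis HC2 : C2 H.
Hypothesis HH1 : H1 H.
Hypothesis HH2 : H2 H.

Lemma core_ii p gam r : p <> (0, 0) -> 1 / 2 <= gam < 1 -> 0 < H p -> H p < r ->
  convex_on (sublev_le H r) (fun q => powr (H q) gam) -> 1 - gam <= tau_tilde H p.
Proof.
  intros Hp Hg Hpos Hr Hc.
  set (a := ha H p). set (b := hb H p). set (d := hd H p).
  set (g1 := pd1 H p). set (g2 := pd2 H p).
  set (w := (d * g1 - b * g2, a * g2 - b * g1)).
  set (h := fun t => H (lin p w t)).
  destruct (CONT_LT h 0 r (cont_line H HC2 p w)) as [d1 [Hd1 K1]].
  { unfold h. rewrite lin0. exact Hr. }
  destruct (CONT_GT h 0 0 (cont_line H HC2 p w)) as [d2 [Hd2 K2]].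
  { unfold h. rewrite lin0. exact Hpos. }
  set (dl := Rmin d1 d2).
  assert (Hdl : 0 < dl) by (apply Rmin_pos; lra).
  assert (Hin : forall t, Rabs t < dl -> 0 < h t < r).
  { intros t Ht. pose proof (Rmin_l d1 d2). pose proof (Rmin_r d1 d2).
    split; [apply K2|apply K1]; rewrite Rminus_0_r; unfold dl in Ht; lra. }
  set (k := fun t => powr (H (lin p w t)) gam).
  set (h' := fun t => Gf H (lin p w t) w).
  set (k' := fun t => exp (gam * ln (h t)) * (gam * (h' t * / h t))).
  assert (Hk : cvx1 k (fun t => sublev_le H r (lin p w t))).
  { intros s t th Hs Ht Hth. unfold k. rewrite <- comb_lin. apply Hc; assumption. }
  assert (Dk : forall t, 0 <= t < dl -> is_derive k t (k' t)).
  { intros t Ht.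
    apply (derive_loc k (fun s => exp (gam * ln (h s))) t _ dl).
    - intros u Hu. unfold k, powr. fold (h u).
      destruct (Rlt_dec 0 (h u)) as [_|Hn]; [reflexivity|].
      exfalso. apply Hn. apply Hin. exact Hu.
    - rewrite Rabs_pos_eq; lra.
    - apply dexpln. apply Hin. rewrite Rabs_pos_eq; lra.
      apply LINE1; exact HC2. }
  set (h0 := h 0). set (E0 := exp (gam * ln h0)).
  assert (Hh0 : 0 < h0) by (apply Hin; rewrite Rabs_R0; lra).
  assert (DE : is_derive (fun s => exp (gam * ln (h s))) 0 (E0 * (gam * (h' 0 * / h0)))).
  { apply dexpln. exact Hh0. apply LINE1; exact HC2. }
  assert (Dh' : is_derive h' 0 (Qf H (lin p w 0) w)) by (apply LINE2; exact HC2).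
  assert (Dinv : is_derive (fun s => / h s) 0 (- h' 0 / h0 ^ 2)).
  { apply is_derive_inv. apply LINE1; exact HC2. fold h0. intro; lra. }
  assert (Dk' : is_derive k' 0
     (E0 * (gam * (h' 0 * / h0)) * (gam * (h' 0 * / h0)) +
      E0 * (gam * (Qf H (lin p w 0) w * / h0 + h' 0 * (- h' 0 / h0 ^ 2))))).
  { unfold k'. eapply deq.
    - apply dmult. exact DE. apply dcmul. apply dmult. exact Dh'. exact Dinv.
    - reflexivity. }
  assert (L0 : 0 <= E0 * (gam * (h' 0 * / h0)) * (gam * (h' 0 * / h0)) +
      E0 * (gam * (Qf H (lin p w 0) w * / h0 + h' 0 * (- h' 0 / h0 ^ 2)))).
  { apply (HESS_1D k k' _ dl _ Hk); [| exact Hdl | | exact Dk | exact Dk'].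
    - unfold h in Hin. pose proof (Hin 0 ltac:(rewrite Rabs_R0; lra)). split; lra.
    - intros t Ht. pose proof (Hin t ltac:(rewrite Rabs_pos_eq; lra)). unfold h in H0. split; lra. }
  rewrite lin0 in L0.
  assert (HE0 : 0 < E0) by apply exp_pos.
  assert (Eh0 : h0 = H p) by (unfold h0, h; rewrite lin0; reflexivity).
  assert (Eh' : h' 0 = NN a b d g1 g2).
  { unfold h', Gf. rewrite lin0. unfold w, NN; simpl. fold g1 g2. ring. }
  assert (EQ : Qf H p w = (a * d - b * b) * NN a b d g1 g2).
  { rewrite (Qf_QQ H). unfold w, QQ, NN; simpl. fold a b d. ring. }
  rewrite Eh', EQ, Eh0 in L0.
  destruct (quad_pos H HC2 HH1 HH2 p Hp) as [Hq [Hdet HN]].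
  fold a b d g1 g2 in Hdet, HN.
  set (N := NN a b d g1 g2) in *. set (det := a * d - b * b) in *.
  assert (Key : (1 - gam) * N <= H p * det).
  { assert (L1 : 0 <= E0 * gam / (H p) ^ 2 * ((gam - 1) * N * N + H p * (det * N))).
    { replace (E0 * gam / (H p) ^ 2 * ((gam - 1) * N * N + H p * (det * N))) with
        (E0 * (gam * (N * / H p)) * (gam * (N * / H p)) +
         E0 * (gam * (det * N * / H p + N * (- N / H p ^ 2)))) by (field; lra).
      exact L0. }
    assert (Hc0 : 0 < E0 * gam / (H p) ^ 2).
    { apply Rdiv_lt_0_compat. apply Rmult_lt_0_compat; lra. apply pow_lt; lra. }
    assert (L2 : 0 <= (gam - 1) * N * N + H p * (det * N)).
    { apply (Rmult_le_reg_l (E0 * gam / (H p) ^ 2)); [exact Hc0|]. lra. }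
    assert (L3 : 0 <= ((gam - 1) * N + H p * det) * N) by (ring_simplify; ring_simplify in L2; lra).
    assert (0 <= (gam - 1) * N + H p * det).
    { apply (Rmult_le_reg_r N); [exact HN|]. lra. }
    lra. }
  rewrite (tau_eq H p Hp), (quad_eq H HC2). fold a b d g1 g2 N det.
  apply (Rmult_le_reg_r (N / det)); [apply Rdiv_lt_0_compat; lra|].
  replace (H p / (N / det) * (N / det)) with (H p) by (field; split; lra).
  apply (Rmult_le_reg_r det); [exact Hdet|].
  replace ((1 - gam) * (N / det) * det) with ((1 - gam) * N) by (field; lra).
  lra.
Qed.
End K.

Lemma cplus (f g : R * R -> R) p : continuous f p -> continuous g p -> continuous (fun q => f q + g q) p.
Proof. intros A B. exact (continuous_plus f g p A B). Qed.
Lemma cminus (f g : R * R -> R) p : continuous f p -> continuous g p -> continuous (fun q => f q - g q) p.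
Proof. intros A B. exact (continuous_minus f g p A B). Qed.
Lemma cmult (f g : R * R -> R) p : continuous f p -> continuous g p -> continuous (fun q => f q * g q) p.
Proof. intros A B. exact (continuous_mult f g p A B). Qed.
Lemma cpow2 (f : R * R -> R) p : continuous f p -> continuous (fun q => f q ^ 2) p.
Proof.
  intros A. eapply continuous_ext; [|apply (cmult f f p A A)]. intros q; simpl; ring.
Qed.
Lemma cconst (c : R) p : continuous (fun _ : R * R => c) p.
Proof. exact (continuous_const c p). Qed.
Lemma cdiv (f g : R * R -> R) p : continuous f p -> continuous g p -> g p <> 0 ->
  continuous (fun q => f q / g q) p.
Proof.
  intros A B N. unfold Rdiv. apply cmult; [exact A|].
  apply (continuous_comp g Rinv p B). apply continuous_Rinv. exact N.
Qed.

Lemma CONT2_eps (f : R * R -> R) p e : continuous f p -> 0 < e ->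
  exists d, 0 < d /\ forall q, Rabs (fst q - fst p) < d -> Rabs (snd q - snd p) < d ->
    Rabs (f q - f p) < e.
Proof.
  intros Hc He.
  destruct (proj1 (filterlim_locally f (f p)) Hc (mkposreal _ He)) as [d Hd].
  exists d. split; [apply cond_pos|].
  intros q H1 H2. apply (Hd q). split; assumption.
Qed.

Lemma locally_ne0 p : p <> (0, 0) -> locally p (fun q => q <> (0, 0)).
Proof.
  intros Hp. destruct p as [p1 p2].
  destruct (Req_dec p1 0) as [E1|E1].
  - assert (E2 : p2 <> 0) by (intro; subst; apply Hp; reflexivity).
    assert (Hpos : 0 < Rabs p2) by (apply Rabs_pos_lt; exact E2).
    exists (mkposreal _ Hpos). intros [q1 q2] [B1 B2] E. injection E as -> ->.
    assert (B : Rabs (0 - p2) < Rabs p2) by exact B2.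
    rewrite Rminus_0_l, Rabs_Ropp in B. lra.
  - assert (Hpos : 0 < Rabs p1) by (apply Rabs_pos_lt; exact E1).
    exists (mkposreal _ Hpos). intros [q1 q2] [B1 B2] E. injection E as -> ->.
    assert (B : Rabs (0 - p1) < Rabs p1) by exact B1.
    rewrite Rminus_0_l, Rabs_Ropp in B. lra.
Qed.

Section L.
Variable H : R * R -> R.
Hypothesis HC2 : C2 H.
Hypothesis HH1 : H1 H.
Hypothesis HH2 : H2 H.

Lemma cont_quad p : p <> (0, 0) -> continuous (inv_hess_quad H) p.
Proof.
  intros Hp.
  destruct (quad_pos H HC2 HH1 HH2 p Hp) as [_ [Hdet _]].
  unfold inv_hess_quad. cbv zeta.
  pose proof (reg_cont_pd11 H HC2 p). pose proof (reg_cont_pd21 H HC2 p).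
  pose proof (reg_cont_pd12 H HC2 p). pose proof (reg_cont_pd22 H HC2 p).
  pose proof (reg_cont1 H HC2 p). pose proof (reg_cont2 H HC2 p).
  apply cdiv.
  - apply cplus; [apply cminus|]; repeat first [assumption | apply cpow2 | apply cmult | apply cplus | apply cconst].
  - apply cminus; apply cmult; assumption.
  - rewrite (reg_schwarz H HC2). unfold ha, hb, hd in Hdet. lra.
Qed.

Lemma cont_tau_ne0 p : p <> (0, 0) -> continuous (tau_tilde H) p.
Proof.
  intros Hp.
  apply (continuous_ext_loc _ (fun q => H q / inv_hess_quad H q)).
  - generalize (locally_ne0 p Hp). apply filter_imp. intros q Hq.
    symmetry. apply tau_eq. exact Hq.
  - apply cdiv. apply (reg_cont0 H HC2). apply cont_quad; exact Hp.
    destruct (quad_pos H HC2 HH1 HH2 p Hp) as [Hq _]. lra.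
Qed.
End L.

Ltac rring := match goal with |- @eq _ ?a ?b => change (@eq R a b) end;
  try change (@fst (UniformSpace.sort R_UniformSpace) (UniformSpace.sort R_UniformSpace)) with (@fst R R);
  try change (@snd (UniformSpace.sort R_UniformSpace) (UniformSpace.sort R_UniformSpace)) with (@snd R R);
  ring.

Section M.
Variable H : R * R -> R.
Hypothesis HC2 : C2 H.
Hypothesis HH1 : H1 H.
Hypothesis HH2 : H2 H.

Lemma tau00 : tau_tilde H (0, 0) = 1 / 2.
Proof.
  unfold tau_tilde; simpl.
  destruct (Req_EM_T 0 0) as [_|n]; [|exfalso; apply n; reflexivity].
  reflexivity.
Qed.

Lemma abs_lin t x : 0 <= t <= 1 -> Rabs (0 + t * x) <= Rabs x.
Proof.
  intros Ht. rewrite Rplus_0_l, Rabs_mult, (Rabs_pos_eq t) by lra.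
  pose proof (Rabs_pos x). nra.
Qed.

Lemma cont_tau0 : continuous (tau_tilde H) (0, 0).
Proof.
  destruct (HESS_ball H HC2 HH1 HH2 2) as [lam [Lam [Hl [HL [Hdisc [_ Hb]]]]]].
  apply (proj2 (filterlim_locally _ _)). intros [eps Heps]. simpl.
  rewrite tau00.
  set (K := 23 + 16 / lam).
  assert (HK : 0 < K) by (unfold K; assert (0 < 16 / lam) by (apply Rdiv_lt_0_compat; lra); lra).
  set (m := Rmin (1 / 2) eps).
  assert (Hm : 0 < m) by (unfold m; apply Rmin_pos; lra).
  set (e := Rmin 1 (lam * m / 2 / K)).
  assert (He : 0 < e).
  { unfold e. apply Rmin_pos; [lra|]. apply Rdiv_lt_0_compat; [|lra]. nra. }
  assert (He1 : e <= 1) by (unfold e; apply Rmin_l).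
  assert (HeK : e * K <= lam * m / 2).
  { pose proof (Rmin_r 1 (lam * m / 2 / K)) as R. fold e in R.
    apply (Rmult_le_compat_r K) in R; [|lra].
    replace (lam * m / 2 / K * K) with (lam * m / 2) in R by (field; lra). exact R. }
  destruct (CONT2_eps (ha H) (0, 0) e (reg_cont_pd11 H HC2 (0, 0)) He) as [da [Hda Ca]].
  destruct (CONT2_eps (hb H) (0, 0) e (reg_cont_pd21 H HC2 (0, 0)) He) as [db [Hdb Cb]].
  destruct (CONT2_eps (hd H) (0, 0) e (reg_cont_pd22 H HC2 (0, 0)) He) as [dd [Hdd Cd]].
  set (dl := Rmin (1 / 2) (Rmin da (Rmin db dd))).
  assert (Hdl : 0 < dl) by (unfold dl; repeat apply Rmin_pos; lra).
  exists (mkposreal dl Hdl). intros [q1 q2] [B1 B2].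
  assert (Hq1 : Rabs q1 < dl).
  { assert (Rabs (q1 - 0) < dl) by exact B1. rewrite Rminus_0_r in H0. exact H0. }
  assert (Hq2 : Rabs q2 < dl).
  { assert (Rabs (q2 - 0) < dl) by exact B2. rewrite Rminus_0_r in H0. exact H0. }
  change (Rabs (tau_tilde H (q1, q2) - 1 / 2) < eps).
  destruct (classic ((q1, q2) = (0, 0))) as [E0|Hne].
  { rewrite E0, tau00. rewrite Rminus_diag, Rabs_R0. exact Heps. }
  set (q := (q1, q2)) in *.
  pose proof (Rmin_l (1/2) (Rmin da (Rmin db dd))) as M1.
  pose proof (Rmin_r (1/2) (Rmin da (Rmin db dd))) as M2.
  pose proof (Rmin_l da (Rmin db dd)) as M3. pose proof (Rmin_r da (Rmin db dd)) as M4.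
  pose proof (Rmin_l db dd) as M5. pose proof (Rmin_r db dd) as M6.
  fold dl in M1, M2.
  assert (Close : forall x, Rabs (fst x) <= Rabs q1 -> Rabs (snd x) <= Rabs q2 ->
     Rabs (ha H x - ha H (0, 0)) <= e /\ Rabs (hb H x - hb H (0, 0)) <= e /\
     Rabs (hd H x - hd H (0, 0)) <= e).
  { intros x X1 X2. simpl.
    assert (Y1 : forall dx, dl <= dx -> Rabs (fst x - 0) < dx) by (intros; rewrite Rminus_0_r; lra).
    assert (Y2 : forall dx, dl <= dx -> Rabs (snd x - 0) < dx) by (intros; rewrite Rminus_0_r; lra).
    split; [|split]; apply Rlt_le.
    - apply Ca; apply Y1 || apply Y2; lra.
    - apply Cb; apply Y1 || apply Y2; lra.
    - apply Cd; apply Y1 || apply Y2; lra. }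
  set (S := sqn q).
  assert (HS : 0 < S) by (apply sqn_pos; exact Hne).
  assert (HS2 : S < 2).
  { unfold S, q, sqn; simpl.
    assert (q1 ^ 2 < 1) by (rewrite <- (Rsqr_abs q1) || idtac; pose proof (Rabs_pos q1);
      assert (Rabs q1 < 1) by lra; replace (q1 ^ 2) with (Rabs q1 * Rabs q1); [nra|];
      rewrite <- Rabs_mult; rewrite Rabs_pos_eq; [ring|nra]).
    assert (q2 ^ 2 < 1) by (pose proof (Rabs_pos q2);
      assert (Rabs q2 < 1) by lra; replace (q2 ^ 2) with (Rabs q2 * Rabs q2); [nra|];
      rewrite <- Rabs_mult; rewrite Rabs_pos_eq; [ring|nra]).
    lra. }
  set (a0 := ha H (0, 0)). set (b0 := hb H (0, 0)). set (d0 := hd H (0, 0)).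
  set (aq := ha H q). set (bq := hb H q). set (dq := hd H q).
  assert (ClLin : forall t, 0 <= t <= 1 ->
     Rabs (ha H (lin (0, 0) q t) - a0) <= e /\ Rabs (hb H (lin (0, 0) q t) - b0) <= e /\
     Rabs (hd H (lin (0, 0) q t) - d0) <= e).
  { intros t Ht. apply Close; unfold lin; simpl; apply abs_lin; exact Ht. }
  assert (ClQ : Rabs (aq - a0) <= e /\ Rabs (bq - b0) <= e /\ Rabs (dq - d0) <= e).
  { apply Close; simpl; lra. }
  destruct (grad0 H HC2 HH2) as [G1 G2].
  set (Q0 := Qf H (0, 0) q).
  assert (Ta : Rabs (2 * H q - Q0) <= 4 * e * S).
  { pose proof (TAYLOR2 (fun t => H (lin (0, 0) q t) - t ^ 2 / 2 * Q0)
       (fun t => Gf H (lin (0, 0) q t) q - t * Q0)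
       (fun t => Qf H (lin (0, 0) q t) q - Q0) (2 * e * S)) as T.
    assert (TT : Rabs (H (lin (0, 0) q 1) - 1 ^ 2 / 2 * Q0 - (H (lin (0, 0) q 0) - 0 ^ 2 / 2 * Q0)) <= 2 * e * S).
    { apply T.
      - intros t _. apply dminus. apply LINE1; exact HC2. apply dsq2.
      - intros t _. apply dminus. apply LINE2; exact HC2. apply dlinc.
      - cbv beta. rewrite lin0. unfold Gf. rewrite G1, G2. ring.
      - intros t Ht. destruct (ClLin t Ht) as [A1 [A2 A3]]. cbv beta.
        rewrite !(Qf_QQ H). unfold Q0. rewrite (Qf_QQ H).
        apply (QDIFF _ _ _ _ _ _ e); assumption. }
    rewrite lin0, lin01, (H00 H HH2) in TT.
    replace (2 * H q - Q0) with (2 * (H q - 1 ^ 2 / 2 * Q0 - (0 - 0 ^ 2 / 2 * Q0))) by field.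
    rewrite Rabs_mult, (Rabs_pos_eq 2) by lra. lra. }
  set (g1 := pd1 H q). set (g2 := pd2 H q).
  set (r1 := g1 - (aq * fst q + bq * snd q)).
  set (r2 := g2 - (bq * fst q + dq * snd q)).
  destruct ClQ as [Q1 [Q2 Q3]].
  assert (Hr1 : Rabs r1 <= 2 * e * (Rabs (fst q) + Rabs (snd q))).
  { pose proof (MVT_bound (fun t => pd1 H (lin (0, 0) q t) - t * (aq * fst q + bq * snd q))
      (fun t => (ha H (lin (0, 0) q t) - aq) * fst q + (hb H (lin (0, 0) q t) - bq) * snd q)
      1 (2 * e * (Rabs (fst q) + Rabs (snd q))) ltac:(lra)) as Mv.
    assert (MM : Rabs (pd1 H (lin (0, 0) q 1) - 1 * (aq * fst q + bq * snd q)
        - (pd1 H (lin (0, 0) q 0) - 0 * (aq * fst q + bq * snd q))) <= 2 * e * (Rabs (fst q) + Rabs (snd q)) * 1).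
    { apply Mv.
      - intros t _. eapply deq. apply dminus. apply (LINE (pd1 H)). apply (reg_diff1 H HC2). apply dlinc.
        unfold ha, hb. rring.
      - intros t Ht. destruct (ClLin t Ht) as [A1 [A2 A3]]. apply (BND _ a0 _ _ b0); assumption. }
    rewrite lin0, lin01, G1 in MM.
    replace r1 with (pd1 H q - 1 * (aq * fst q + bq * snd q) - (0 - 0 * (aq * fst q + bq * snd q)))
      by (unfold r1, g1; ring).
    lra. }
  assert (Hr2 : Rabs r2 <= 2 * e * (Rabs (fst q) + Rabs (snd q))).
  { pose proof (MVT_bound (fun t => pd2 H (lin (0, 0) q t) - t * (bq * fst q + dq * snd q))
      (fun t => (hb H (lin (0, 0) q t) - bq) * fst q + (hd H (lin (0, 0) q t) - dq) * snd q)
      1 (2 * e * (Rabs (fst q) + Rabs (snd q))) ltac:(lra)) as Mv.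
    assert (MM : Rabs (pd2 H (lin (0, 0) q 1) - 1 * (bq * fst q + dq * snd q)
        - (pd2 H (lin (0, 0) q 0) - 0 * (bq * fst q + dq * snd q))) <= 2 * e * (Rabs (fst q) + Rabs (snd q)) * 1).
    { apply Mv.
      - intros t _. eapply deq. apply dminus. apply (LINE (pd2 H)). apply (reg_diff2 H HC2). apply dlinc.
        rewrite (reg_schwarz H HC2). unfold hb, hd. rring.
      - intros t Ht. destruct (ClLin t Ht) as [A1 [A2 A3]]. apply (BND _ b0 _ _ d0); assumption. }
    rewrite lin0, lin01, G2 in MM.
    replace r2 with (pd2 H q - 1 * (bq * fst q + dq * snd q) - (0 - 0 * (bq * fst q + dq * snd q)))
      by (unfold r2, g2; ring).
    lra. }
  assert (HSq : S = fst q ^ 2 + snd q ^ 2) by reflexivity.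
  assert (HR2 : r1 ^ 2 + r2 ^ 2 <= 16 * e ^ 2 * S).
  { pose proof (SQB r1 (2 * e) (fst q) (snd q) Hr1 ltac:(lra)).
    pose proof (SQB r2 (2 * e) (fst q) (snd q) Hr2 ltac:(lra)).
    rewrite HSq. nra. }
  assert (HQq : forall v1 v2, lam * (v1 ^ 2 + v2 ^ 2) <= QQ aq bq dq v1 v2).
  { intros v1 v2. destruct (Hb q (v1, v2) HS2) as [B _]. rewrite (Qf_QQ H) in B.
    unfold sqn in B; simpl in B. exact B. }
  pose proof (ALG_det _ _ _ lam Hl HQq) as Hdet.
  destruct (ALG_N _ _ _ lam Hl HQq r1 r2) as [N0 [N1 _]].
  pose proof (AMGM e (fst q) (snd q) r1 r2 He) as AM.
  assert (QD : Rabs (QQ aq bq dq (fst q) (snd q) - Q0) <= 2 * e * S).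
  { unfold Q0. rewrite (Qf_QQ H). rewrite HSq. apply QDIFF; assumption. }
  assert (HD : lam * S <= 2 * H q).
  { pose proof (Hdisc q ltac:(unfold S in HS2; lra)). fold S in H0. lra. }
  rewrite (tau_eq H q Hne), (quad_eq H HC2 q). fold aq bq dq g1 g2.
  assert (EN : NN aq bq dq g1 g2 = NN aq bq dq (aq * fst q + bq * snd q + r1) (bq * fst q + dq * snd q + r2)).
  { unfold r1, r2. f_equal; ring. }
  rewrite EN.
  rewrite NN_expand.
  apply (FINAL0 (H q) _ S Q0 (QQ aq bq dq (fst q) (snd q)) (2 * (fst q * r1 + snd q * r2))
           (NN aq bq dq r1 r2 / (aq * dq - bq * bq)) (r1 ^ 2 + r2 ^ 2) lam e eps); try assumption.
  - field. lra.
  - unfold Rdiv; apply Rmult_le_pos; [exact N0| left; apply Rinv_0_lt_compat; exact Hdet].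
Qed.
End M.

Lemma cont_lin x v t : continuous (lin x v) t.
Proof.
  unfold lin.
  apply (continuous_comp_2 (fun s => fst x + s * fst v) (fun s => snd x + s * snd v) (fun a b => (a, b))).
  - eapply dcont. apply is_derive_aff.
  - eapply dcont. apply is_derive_aff.
  - eapply continuous_ext; [|apply continuous_id]. intros [a b]. reflexivity.
Qed.

Section N.
Variable H : R * R -> R.
Hypothesis HC2 : C2 H.
Hypothesis HH1 : H1 H.
Hypothesis HH2 : H2 H.

Lemma Hpos x : x <> (0, 0) -> 0 < H x.
Proof.
  intros Hx. destruct (HESS_ball H HC2 HH1 HH2 (sqn x)) as [lam [Lam [Hl [_ [Hd _]]]]].
  pose proof (Hd x (Rle_refl _)). pose proof (sqn_pos x Hx).
  assert (0 < lam / 2 * sqn x) by (apply Rmult_lt_0_compat; lra). lra.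
Qed.

Lemma cont_tau p : continuous (tau_tilde H) p.
Proof.
  destruct (classic (p = (0, 0))) as [E|E].
  - subst. apply cont_tau0; assumption.
  - apply cont_tau_ne0; assumption.
Qed.

Lemma tau_pos p : p <> (0, 0) -> 0 < tau_tilde H p.
Proof.
  intros Hp. rewrite (tau_eq H p Hp).
  destruct (quad_pos H HC2 HH1 HH2 p Hp) as [Hq _].
  apply Rdiv_lt_0_compat; [apply Hpos; exact Hp|exact Hq].
Qed.

Lemma part_ii gam r : 1 / 2 <= gam < 1 -> 0 < r ->
  convex_on (sublev_le H r) (fun p => powr (H p) gam) ->
  forall p, sublev_le H r p -> tau_tilde H p >= 1 - gam.
Proof.
  intros Hg Hr Hc p [Hp0 Hpr].
  apply Rle_ge.
  destruct (classic (p = (0, 0))) as [E|Hne].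
  { subst. rewrite (tau00 H). lra. }
  pose proof (Hpos p Hne) as HpP.
  destruct (Rlt_or_le (H p) r) as [Hlt|Hge].
  { apply (core_ii H HC2 HH1 HH2 p gam r); assumption. }
  destruct (Rle_or_lt (1 - gam) (tau_tilde H p)) as [|Hbad]; [assumption|exfalso].
  assert (Ck : continuous (fun s => tau_tilde H (lin (0, 0) p s)) 1).
  { apply (continuous_comp (lin (0, 0) p) (tau_tilde H) 1).
    apply cont_lin. apply cont_tau. }
  destruct (CONT_LT _ 1 (1 - gam) Ck) as [d [Hd Hk]].
  { rewrite lin01. exact Hbad. }
  set (s := Rmax (1 / 2) (1 - d / 2)).
  assert (Hs1 : 1 / 2 <= s) by (unfold s; apply Rmax_l).
  assert (Hs2 : 1 - d / 2 <= s) by (unfold s; apply Rmax_r).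
  assert (Hs3 : s < 1).
  { unfold s. apply Rmax_lub_lt; lra. }
  assert (Hx : lin (0, 0) p s <> (0, 0)).
  { intros E. rewrite lin00 in E. injection E as E1 E2.
    apply Hne. destruct p as [p1 p2]. simpl in *.
    assert (p1 = 0) by (apply (Rmult_eq_reg_l s); [lra|lra]).
    assert (p2 = 0) by (apply (Rmult_eq_reg_l s); [lra|lra]).
    subst; reflexivity. }
  destruct (HESS_ball H HC2 HH1 HH2 (sqn p)) as [lam [Lam [_ [_ [_ [Hseg _]]]]]].
  pose proof (Hseg p s (Rle_refl _) ltac:(lra)) as Hs.
  assert (Hxr : H (lin (0, 0) p s) < r) by nra.
  pose proof (core_ii H HC2 HH1 HH2 (lin (0, 0) p s) gam r Hx Hg (Hpos _ Hx) Hxr Hc) as C.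
  assert (tau_tilde H (lin (0, 0) p s) < 1 - gam).
  { apply Hk. rewrite Rabs_left1 by lra. lra. }
  lra.
Qed.

Lemma part_ic p : p <> (0, 0) ->
  tau_tilde H p >= 1 / 2 * (real (lambda_H H (H p)) / real (Lambda_H H (H p))) ^ 2.
Proof.
  intros Hp. apply Rle_ge. unfold lambda_H, Lambda_H.
  apply (RBAR (tau_tilde H p)
    (fun e l => 0 < l /\ convex_on (sublev_lt H (H p + e)) (fun q => H q - l / 2 * sqn q))
    (fun e L => 0 < L /\ convex_on (sublev_lt H (H p + e)) (fun q => L / 2 * sqn q - H q))).
  - apply tau_pos; exact Hp.
  - intros e l [Hl _]; exact Hl.
  - intros e L [HL _]; exact HL.
  - intros e1 e2 l L He1 He2 [Hl Cl] [HL CL].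
    apply (core_i H HC2 HH1 HH2 p e1 e2 l L); assumption.
Qed.
End N.

Theorem lemmaA2 (H : R * R -> R) :
  C2 H -> H1 H -> H2 H ->
  ((forall p, continuous (tau_tilde H) p) /\
   tau_tilde H (0, 0) = 1 / 2 /\
   (forall p, p <> (0, 0) ->
      tau_tilde H p >= 1 / 2 *
        (real (lambda_H H (H p)) / real (Lambda_H H (H p))) ^ 2)) /\
  (forall (gam r : R), 1 / 2 <= gam < 1 -> 0 < r ->
     convex_on (sublev_le H r) (fun p => powr (H p) gam) ->
     forall p, sublev_le H r p -> tau_tilde H p >= 1 - gam).
Proof.
  intros HC2 HH1 HH2. split; [split; [|split]|].
  - apply cont_tau; assumption.
  - apply tau00.
  - apply part_ic; assumption.
  - apply part_ii; assumption.
Qed.
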